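(* For every scoring function $S$ and every integer $n\ge2$, $$\lambda_n(S)\le\lambda(S)\le\lambda_n(S)+c_n\|S\|_\delta\frac{\sqrt{\ln n}}{\sqrt n}+\frac{2\|S\|_\infty}{n},\qquad c_n=\sqrt{\frac{2\ln3+2\ln(n+2)}{\ln n}}.$$
   Context: Let $\mathcal{A}$ be a finite alphabet and $\mathcal{A}^*=\mathcal{A}\cup\{G\}$, where $G$ is a gap symbol. A scoring function is a symmetric map $S:\mathcal{A}^*\times\mathcal{A}^*\to\mathbb{R}$; $\|S\|_\delta=\max_{c,d,e\in\mathcal{A}^*}|S(c,d)-S(c,e)|$ and $\|S\|_\infty=\max_{c,d\in\mathcal{A}^*}|S(c,d)|$. For strings $x=x_1\dots x_m$, $y=y_1\dots y_{m'}$ over $\mathcal{A}$, an alignment $\pi$ is a sequence $((\mu_1,\nu_1),\dots,(\mu_k,\nu_k))$, $k\ge0$, with $1\le\mu_1<\dots<\mu_k\le m$ and $1\le\nu_1<\dots<\nu_k\le m'$; its score is $S_\pi(x,y)=\sum_{i=1}^k S(x_{\mu_i},y_{\nu_i})+\sum_{j\notin\{\mu_i\}}S(x_j,G)+\sum_{j\notin\{\nu_i\}}S(G,y_j)$, and $L_S(x,y)=\max_\pi S_\pi(x,y)$. Let $X_1,X_2,\dots,Y_1,Y_2,\dots$ be i.i.d. letters in $\mathcal{A}$. Put $L_n(S)=L_S(X_1\dots X_n,Y_1\dots Y_n)$, $\lambda_n(S)=E[L_n(S)]/n$ and $\lambda(S)=\lim_{n\to\infty}\lambda_n(S)$ (which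 exists). *)

(* Defs.v *)
From Stdlib Require Import Reals Lra Lia List Arith Compare_dec.
Import ListNotations.
Open Scope R_scope.

(* Alphabet: letters are the naturals 0..k-1 (k = |A|).
   Extended alphabet A* = A ∪ {G}: elements of [option nat],
   [Some a] a letter, [None] the gap symbol G. *)
Definition inA (k : nat) (c : option nat) : Prop :=
  match c with None => True | Some a => (a < k)%nat end.

Definition Astar (k : nat) : list (option nat) := None :: map Some (seq 0 k).

Definition scoring := option nat -> option nat -> R.

Definition is_scoring (k : nat) (S : scoring) : Prop :=
  forall c d, inA k c -> inA k d -> S c d = S d c.

Definition maxl (l : list R) : R := fold_right Rmax 0 l.

Definition norm_delta (k : nat) (S : scoring) : R :=
  maxl (flat_map (fun c => flat_map (fun d => map (fun e => Rabs (S c d - S c e))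
          (Astar k)) (Astar k)) (Astar k)).

Definition norm_inf (k : nat) (S : scoring) : R :=
  maxl (flat_map (fun c => map (fun d => Rabs (S c d)) (Astar k)) (Astar k)).

(* Alignments (0-based indices): lists of pairs (mu_i, nu_i) with
   mu_1 < ... < mu_k < m and nu_1 < ... < nu_k < m'. *)
Fixpoint incr (l : list nat) : Prop :=
  match l with
  | [] => True
  | a :: t => match t with [] => True | b :: _ => (a < b)%nat /\ incr t end
  end.

Definition is_alignment (m m' : nat) (pi : list (nat * nat)) : Prop :=
  incr (map fst pi) /\ incr (map snd pi) /\
  Forall (fun q => (fst q < m)%nat /\ (snd q < m')%nat) pi.

Fixpoint subseqs {T} (l : list T) : list (list T) :=
  match l with
  | [] => [[]]
  | a :: t => map (cons a) (subseqs t) ++ subseqs t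
  end.

Definition all_pairs (m m' : nat) : list (nat * nat) :=
  flat_map (fun i => map (fun j => (i, j)) (seq 0 m')) (seq 0 m).

Definition is_alignment_dec (m m' : nat) (pi : list (nat * nat)) :
  {is_alignment m m' pi} + {~ is_alignment m m' pi}.
Proof.
  unfold is_alignment.
  assert (Hi : forall l, {incr l} + {~ incr l}).
  { induction l as [|a t IH]; simpl; [left; exact I|].
    destruct t as [|b t']; [left; exact I|].
    destruct (lt_dec a b); destruct IH; tauto. }
  destruct (Hi (map fst pi)); [|right; tauto].
  destruct (Hi (map snd pi)); [|right; tauto].
  assert (Hq : forall q : nat * nat, {(fst q < m)%nat /\ (snd q < m')%nat} +
                          {~ ((fst q < m)%nat /\ (snd q < m')%nat)}).
  { intros q; destruct (lt_dec (fst q) m); destruct (lt_dec (snd q) m'); tauto. }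
  destruct (Forall_dec _ Hq pi); [left; tauto | right; tauto].
Defined.

(* every alignment is a subsequence of all_pairs m m'; this list is the
   list of all alignments of strings of lengths m and m' *)
Definition alignments (m m' : nat) : list (list (nat * nat)) :=
  filter (fun pi => if is_alignment_dec m m' pi then true else false)
         (subseqs (all_pairs m m')).

Definition sumR (l : list R) : R := fold_right Rplus 0 l.

Definition align_score (S : scoring) (x y : list nat) (pi : list (nat * nat)) : R :=
  sumR (map (fun q => S (Some (nth (fst q) x 0%nat)) (Some (nth (snd q) y 0%nat))) pi)
  + sumR (map (fun j => if in_dec Nat.eq_dec j (map fst pi) then 0
                        else S (Some (nth j x 0%nat)) None) (seq 0 (length x)))
  + sumR (map (fun j => if in_dec Nat.eq_dec j (map snd pi) then 0
                        else S None (Some (nth j y 0%nat))) (seq 0 (length y))).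

(* L_S(x,y) = max over alignments (the empty alignment is always one) *)
Definition LS (S : scoring) (x y : list nat) : R :=
  fold_right Rmax (align_score S x y [])
    (map (align_score S x y) (alignments (length x) (length y))).

Fixpoint words (k n : nat) : list (list nat) :=
  match n with
  | O => [[]]
  | S n' => flat_map (fun a => map (cons a) (words k n')) (seq 0 k)
  end.

Definition word_prob (p : nat -> R) (x : list nat) : R :=
  fold_right Rmult 1 (map p x).

(* E[L_n(S)] for X_i, Y_i i.i.d. with law p on {0,..,k-1} *)
Definition ELn (k : nat) (p : nat -> R) (S : scoring) (n : nat) : R :=
  sumR (flat_map (fun x => map (fun y => word_prob p x * word_prob p y * LS S x y)
                             (words k n)) (words k n)).

Definition lambda_n (k : nat) (p : nat -> R) (S : scoring) (n : nat) : R :=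
  ELn k p S n / INR n.

Definition is_distribution (k : nat) (p : nat -> R) : Prop :=
  (forall a, (a < k)%nat -> 0 <= p a) /\ sumR (map p (seq 0 k)) = 1.

Definition c_n (n : nat) : R :=
  sqrt ((2 * ln 3 + 2 * ln (INR n + 2)) / ln (INR n)).

(* Main.v *)
Require Import Defs.
From Stdlib Require Import Reals Lra Lia List Arith.
From Coquelicot Require Coquelicot.
Import ListNotations.
Open Scope R_scope.

Module PA.

Section DP.
Variable Sc : scoring.

Fixpoint Lr (x y : list nat) : R :=
 match x with
 | [] => fold_right (fun b r => Sc None (Some b) + r) 0 y
 | a :: x' => (fix L1 (y : list nat) : R := match y with
                | [] => Sc (Some a) None + Lr x' []
                | b :: y' => Rmax (Sc (Some a) (Some b) + Lr x' y')
                     (Rmax (Sc (Some a) None + Lr x' (b::y')) (Sc None (Some b) + L1 y'))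
               end) y
 end.

Lemma Lr_nn : Lr [] [] = 0. Proof. reflexivity. Qed.
Lemma Lr_nc b y : Lr [] (b::y) = Sc None (Some b) + Lr [] y. Proof. reflexivity. Qed.
Lemma Lr_cn a x : Lr (a::x) [] = Sc (Some a) None + Lr x []. Proof. reflexivity. Qed.
Lemma Lr_cc a x b y : Lr (a::x) (b::y) = Rmax (Sc (Some a) (Some b) + Lr x y)
   (Rmax (Sc (Some a) None + Lr x (b::y)) (Sc None (Some b) + Lr (a::x) y)).
Proof. reflexivity. Qed.

Definition shx (pi : list (nat*nat)) := map (fun q => (S (fst q), snd q)) pi.
Definition shy (pi : list (nat*nat)) := map (fun q => (fst q, S (snd q))) pi.
Definition shxy (pi : list (nat*nat)) := map (fun q => (S (fst q), S (snd q))) pi.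

Lemma sumR_app l1 l2 : sumR (l1 ++ l2) = sumR l1 + sumR l2.
Proof. induction l1; simpl; [ring| rewrite IHl1; ring]. Qed.

Lemma sumR_ext {A} (f g : A -> R) l : (forall x, In x l -> f x = g x) ->
  sumR (map f l) = sumR (map g l).
Proof.
  induction l; simpl; intros H; auto.
  rewrite H by auto. rewrite IHl by auto. reflexivity.
Qed.

Lemma sumR_cons x l : sumR (x :: l) = x + sumR l.
Proof. reflexivity. Qed.

Lemma seq_S0 n : seq 0 (S n) = 0%nat :: map S (seq 0 n).
Proof. simpl. rewrite seq_shift. reflexivity. Qed.

Lemma gap_shift (T : nat -> R) (l : list nat) n :
  sumR (map (fun j => if in_dec Nat.eq_dec j (map S l) then 0 else T j) (seq 0%nat (S n)))
  = T 0%nat + sumR (map (fun j => if in_dec Nat.eq_dec j l then 0 else T (S j)) (seq 0%nat n)).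
Proof.
  rewrite seq_S0, map_cons, sumR_cons.
  destruct (in_dec Nat.eq_dec 0%nat (map S l)) as [Hi|Hi].
  { apply in_map_iff in Hi. destruct Hi as [? [? _]]; discriminate. }
  f_equal. rewrite map_map. apply sumR_ext. intros j _.
  destruct (in_dec Nat.eq_dec (S j) (map S l)) as [H1|H1];
  destruct (in_dec Nat.eq_dec j l) as [H2|H2]; auto.
  - exfalso. apply in_map_iff in H1. destruct H1 as [j' [E H]]. injection E; intros; subst; auto.
  - exfalso. apply H1. apply in_map; auto.
Qed.

Lemma gap_shift0 (T : nat -> R) (l : list nat) n :
  sumR (map (fun j => if in_dec Nat.eq_dec j (0%nat :: map S l) then 0 else T j) (seq 0%nat (S n)))
  = sumR (map (fun j => if in_dec Nat.eq_dec j l then 0 else T (S j)) (seq 0%nat n)).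
Proof.
  rewrite seq_S0, map_cons, sumR_cons.
  destruct (in_dec Nat.eq_dec 0%nat (0%nat :: map S l)) as [Hi|Hi].
  2:{ exfalso; apply Hi; left; auto. }
  rewrite Rplus_0_l. rewrite map_map. apply sumR_ext. intros j _.
  destruct (in_dec Nat.eq_dec (S j) (0%nat :: map S l)) as [H1|H1];
  destruct (in_dec Nat.eq_dec j l) as [H2|H2]; auto.
  - exfalso. destruct H1 as [H1|H1]; [discriminate|].
    apply in_map_iff in H1. destruct H1 as [j' [E H]]. injection E; intros; subst; auto.
  - exfalso. apply H1. right. apply in_map; auto.
Qed.

Lemma score_shx a x y pi :
  align_score Sc (a::x) y (shx pi) = Sc (Some a) None + align_score Sc x y pi.
Proof.
  unfold align_score, shx. simpl length.
  replace (map fst (map (fun q : nat * nat => (S (fst q), snd q)) pi)) with (map S (map fst pi))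
    by (rewrite !map_map; reflexivity).
  replace (map snd (map (fun q : nat * nat => (S (fst q), snd q)) pi)) with (map snd pi)
    by (rewrite !map_map; reflexivity).
  rewrite gap_shift, map_map. simpl. ring.
Qed.

Lemma score_shy b x y pi :
  align_score Sc x (b::y) (shy pi) = Sc None (Some b) + align_score Sc x y pi.
Proof.
  unfold align_score, shy. simpl length.
  replace (map snd (map (fun q : nat * nat => (fst q, S (snd q))) pi)) with (map S (map snd pi))
    by (rewrite !map_map; reflexivity).
  replace (map fst (map (fun q : nat * nat => (fst q, S (snd q))) pi)) with (map fst pi)
    by (rewrite !map_map; reflexivity).
  rewrite gap_shift, map_map. simpl. ring.
Qed.

Lemma score_shxy a b x y pi :
  align_score Sc (a::x) (b::y) ((0,0)%nat :: shxy pi) = Sc (Some a) (Some b) + align_score Sc x y pi.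
Proof.
  unfold align_score, shxy. simpl length.
  replace (map fst ((0,0)%nat :: map (fun q : nat * nat => (S (fst q), S (snd q))) pi)) with (0%nat :: map S (map fst pi))
    by (simpl; rewrite !map_map; reflexivity).
  replace (map snd ((0,0)%nat :: map (fun q : nat * nat => (S (fst q), S (snd q))) pi)) with (0%nat :: map S (map snd pi))
    by (simpl; rewrite !map_map; reflexivity).
  rewrite !gap_shift0, map_cons, sumR_cons, map_map. simpl. ring.
Qed.

Lemma incr_Forall a l : incr (a::l) -> Forall (lt a) l.
Proof.
  revert a; induction l as [|b l IH]; intros a H; constructor.
  - destruct H; auto.
  - destruct H as [H1 H2]. specialize (IH b H2).
    eapply Forall_impl; [|exact IH]. intros c Hc; simpl in *; lia.
Qed.

Lemma incr_tail a l : incr (a::l) -> incr l.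
Proof. destruct l; simpl; tauto. Qed.

Lemma incr_map_S l : incr l -> incr (map S l).
Proof. induction l as [|a [|b l] IH]; simpl; auto. intros [H1 H2]. split; [lia|]. apply IH; auto. Qed.

Lemma incr_0S l : incr l -> incr (0%nat :: map S l).
Proof. intros H. destruct l; simpl; auto. split; [lia|]. apply (incr_map_S (n::l)); auto. Qed.

Lemma incr_pred l : Forall (fun b => 1 <= b)%nat l -> incr l -> incr (map pred l).
Proof.
  induction l as [|a [|b l] IH]; simpl; auto. intros HF [H1 H2].
  inversion HF; subst. inversion H4; subst. split; [lia|]. apply IH; auto.
Qed.

Lemma al_nil m m' : is_alignment m m' [].
Proof. repeat split; simpl; auto. Qed.

Lemma al_shx m m' pi : is_alignment m m' pi -> is_alignment (S m) m' (shx pi).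
Proof.
  intros [H1 [H2 H3]]. unfold shx. repeat split.
  - rewrite map_map. simpl. rewrite <- (map_map fst S). apply incr_map_S; auto.
  - rewrite map_map. simpl. auto.
  - rewrite Forall_map. eapply Forall_impl; [|exact H3]. simpl; intros; lia.
Qed.

Lemma al_shy m m' pi : is_alignment m m' pi -> is_alignment m (S m') (shy pi).
Proof.
  intros [H1 [H2 H3]]. unfold shy. repeat split.
  - rewrite map_map. simpl. auto.
  - rewrite map_map. simpl. rewrite <- (map_map snd S). apply incr_map_S; auto.
  - rewrite Forall_map. eapply Forall_impl; [|exact H3]. simpl; intros; lia.
Qed.

Lemma al_shxy m m' pi : is_alignment m m' pi -> is_alignment (S m) (S m') ((0,0)%nat :: shxy pi).
Proof.
  intros [H1 [H2 H3]]. unfold shxy. repeat split.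
  - simpl. rewrite map_map. simpl. rewrite <- (map_map fst S). apply incr_0S; auto.
  - simpl. rewrite map_map. simpl. rewrite <- (map_map snd S). apply incr_0S; auto.
  - constructor; [simpl; lia|]. rewrite Forall_map. eapply Forall_impl; [|exact H3]. simpl; intros; lia.
Qed.

Lemma al_0 m' pi : is_alignment 0 m' pi -> pi = [].
Proof. intros [_ [_ H]]. destruct pi; auto. inversion H; subst. lia. Qed.

Lemma al_0' m pi : is_alignment m 0 pi -> pi = [].
Proof. intros [_ [_ H]]. destruct pi; auto. inversion H; subst. lia. Qed.

Lemma al_decomp m m' pi : is_alignment (S m) (S m') pi ->
  (exists pi', pi = shx pi' /\ is_alignment m (S m') pi') \/
  (exists pi', pi = shy pi' /\ is_alignment (S m) m' pi') \/
  (exists pi', pi = (0,0)%nat :: shxy pi' /\ is_alignment m m' pi').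
Proof.
  intros [H1 [H2 H3]].
  destruct pi as [|[i j] rho].
  { left. exists []. split; [reflexivity| apply al_nil]. }
  pose proof H1 as H1o; pose proof H2 as H2o.
  simpl in H1, H2.
  pose proof (incr_Forall _ _ H1) as F1. pose proof (incr_Forall _ _ H2) as F2.
  rewrite Forall_map in F1, F2.
  destruct i as [|i].
  - destruct j as [|j].
    + right; right. exists (map (fun q => (pred (fst q), pred (snd q))) rho). split.
      * unfold shxy. rewrite map_map. f_equal. rewrite <- (map_id rho) at 1.
        apply map_ext_in. intros [u v] Hin. simpl.
        rewrite Forall_forall in F1, F2. specialize (F1 _ Hin); specialize (F2 _ Hin). simpl in *.
        f_equal; lia.
      * repeat split.
        -- rewrite map_map. simpl. rewrite <- (map_map fst pred). apply incr_pred.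
           ++ rewrite Forall_map. eapply Forall_impl; [|exact F1]. simpl; intros; lia.
           ++ apply incr_tail in H1. auto.
        -- rewrite map_map. simpl. rewrite <- (map_map snd pred). apply incr_pred.
           ++ rewrite Forall_map. eapply Forall_impl; [|exact F2]. simpl; intros; lia.
           ++ apply incr_tail in H2. auto.
        -- inversion H3 as [|? ? _ H6]; subst. rewrite Forall_map. rewrite Forall_forall in *.
           intros q Hq. specialize (F1 _ Hq); specialize (F2 _ Hq); specialize (H6 _ Hq). simpl in *. lia.
    + right; left. exists (map (fun q => (fst q, pred (snd q))) ((0%nat, S j) :: rho)). split.
      * unfold shy. rewrite map_map. rewrite <- (map_id ((0%nat, S j) :: rho)) at 1.
        apply map_ext_in. intros [u v] Hin. simpl.
        destruct Hin as [E|Hin]; [injection E; intros; subst; reflexivity|].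
        rewrite Forall_forall in F2. specialize (F2 _ Hin). simpl in *. f_equal; lia.
      * repeat split.
        -- rewrite map_map. exact H1o.
        -- replace (map snd (map (fun q => (fst q, pred (snd q))) ((0%nat, S j) :: rho)))
             with (map pred (map snd ((0%nat, S j) :: rho))) by (rewrite !map_map; reflexivity).
           apply incr_pred; [|exact H2o]. simpl. constructor; [lia|].
           rewrite Forall_map. eapply Forall_impl; [|exact F2]. simpl; intros; lia.
        -- rewrite Forall_map. rewrite Forall_forall in *.
           intros q Hq. specialize (H3 _ Hq). destruct Hq as [Hq|Hq].
           ++ subst q. simpl in *. lia.
           ++ specialize (F2 _ Hq). simpl in *. lia.
  - left. exists (map (fun q => (pred (fst q), snd q)) ((S i, j) :: rho)). split.
      * unfold shx. rewrite map_map. rewrite <- (map_id ((S i, j) :: rho)) at 1.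
        apply map_ext_in. intros [u v] Hin. simpl.
        destruct Hin as [E|Hin]; [injection E; intros; subst; reflexivity|].
        rewrite Forall_forall in F1. specialize (F1 _ Hin). simpl in *. f_equal; lia.
      * repeat split.
        -- replace (map fst (map (fun q => (pred (fst q), snd q)) ((S i, j) :: rho)))
             with (map pred (map fst ((S i, j) :: rho))) by (rewrite !map_map; reflexivity).
           apply incr_pred; [|exact H1o]. simpl. constructor; [lia|].
           rewrite Forall_map. eapply Forall_impl; [|exact F1]. simpl; intros; lia.
        -- rewrite map_map. exact H2o.
        -- rewrite Forall_map. rewrite Forall_forall in *.
           intros q Hq. specialize (H3 _ Hq). destruct Hq as [Hq|Hq].
           ++ subst q. simpl in *. lia.
           ++ specialize (F1 _ Hq). simpl in *. lia.
Qed.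

Lemma score_nil_nil : align_score Sc [] [] [] = 0.
Proof. unfold align_score; simpl. ring. Qed.

Lemma Rmax_or a b : Rmax a b = a \/ Rmax a b = b.
Proof. unfold Rmax; destruct (Rle_dec a b); auto. Qed.

Lemma score_le_Lr x : forall y pi, is_alignment (length x) (length y) pi ->
  align_score Sc x y pi <= Lr x y.
Proof.
  induction x as [|a x IHx]; intros y; induction y as [|b y IHy]; intros pi Hpi; simpl length in Hpi.
  - rewrite (al_0 _ _ Hpi), score_nil_nil, Lr_nn. lra.
  - rewrite (al_0 _ _ Hpi). change (@nil (nat*nat)) with (shy []).
    rewrite score_shy, Lr_nc. specialize (IHy [] (al_nil _ _)). lra.
  - rewrite (al_0' _ _ Hpi). change (@nil (nat*nat)) with (shx []).
    rewrite score_shx, Lr_cn. specialize (IHx [] [] (al_nil _ _)). lra.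
  - rewrite Lr_cc. destruct (al_decomp _ _ _ Hpi) as [[pi' [E H]]|[[pi' [E H]]|[pi' [E H]]]]; subst pi.
    + rewrite score_shx. specialize (IHx (b::y) pi' H).
      eapply Rle_trans; [|apply Rmax_r]. eapply Rle_trans; [|apply Rmax_l]. lra.
    + rewrite score_shy. specialize (IHy pi' H).
      eapply Rle_trans; [|apply Rmax_r]. eapply Rle_trans; [|apply Rmax_r]. lra.
    + rewrite score_shxy. specialize (IHx y pi' H).
      eapply Rle_trans; [|apply Rmax_l]. lra.
Qed.

Lemma Lr_attained x : forall y, exists pi, is_alignment (length x) (length y) pi /\
  align_score Sc x y pi = Lr x y.
Proof.
  induction x as [|a x IHx]; intros y; induction y as [|b y IHy].
  - exists []. split; [apply al_nil|]. rewrite score_nil_nil, Lr_nn; auto.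
  - destruct IHy as [pi [H E]]. exists (shy pi). split; [apply al_shy; auto|].
    rewrite score_shy, Lr_nc, E. auto.
  - destruct (IHx []) as [pi [H E]]. exists (shx pi). split; [apply al_shx; auto|].
    rewrite score_shx, Lr_cn, E. auto.
  - rewrite Lr_cc.
    destruct (Rmax_or (Sc (Some a) (Some b) + Lr x y)
       (Rmax (Sc (Some a) None + Lr x (b :: y)) (Sc None (Some b) + Lr (a :: x) y))) as [E1|E1]; rewrite E1.
    + destruct (IHx y) as [pi [H E]]. exists ((0,0)%nat :: shxy pi). split; [apply al_shxy; auto|].
      rewrite score_shxy, E; auto.
    + destruct (Rmax_or (Sc (Some a) None + Lr x (b :: y)) (Sc None (Some b) + Lr (a :: x) y)) as [E2|E2]; rewrite E2.
      * destruct (IHx (b::y)) as [pi [H E]]. exists (shx pi). split; [apply al_shx; auto|].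
        rewrite score_shx, E; auto.
      * destruct IHy as [pi [H E]]. exists (shy pi). split; [apply al_shy; auto|].
        rewrite score_shy, E; auto.
Qed.
End DP.

Lemma subseqs_nil {T} (l : list T) : In [] (subseqs l).
Proof. induction l; simpl; auto. apply in_app_iff; right; auto. Qed.

Lemma subseqs_app {T} (l1 l2 s1 s2 : list T) : In s1 (subseqs l1) -> In s2 (subseqs l2) ->
  In (s1 ++ s2) (subseqs (l1 ++ l2)).
Proof.
  revert s1; induction l1 as [|a t IH]; intros s1 H1 H2; simpl in *.
  - destruct H1 as [<-|[]]. auto.
  - apply in_app_iff in H1. apply in_app_iff. destruct H1 as [H1|H1].
    + left. apply in_map_iff in H1. destruct H1 as [s [<- Hs]].
      simpl. apply in_map. auto.
    + right. auto.
Qed.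

Lemma subseqs_single {T} (l : list T) z : In z l -> In [z] (subseqs l).
Proof.
  induction l as [|a t IH]; simpl; intros H; [destruct H|].
  apply in_app_iff. destruct H as [<-|H].
  - left. apply in_map. apply subseqs_nil.
  - right. auto.
Qed.

Lemma incr_app_inv l z : incr (l ++ [z]) -> incr l /\ Forall (fun a => a < z)%nat l.
Proof.
  induction l as [|a l IH]; simpl; intros H; [split; auto|].
  destruct l as [|b l].
  - simpl in H. split; [exact I|]. constructor; [tauto|constructor].
  - simpl in H. destruct H as [H1 H2]. change (incr ((b :: l) ++ [z])) in H2.
    destruct (IH H2) as [I1 F1]. split.
    + simpl. split; auto.
    + constructor; auto. inversion F1; subst. lia.
Qed.

Lemma all_pairs_S m m' : all_pairs (S m) m' = all_pairs m m' ++ map (fun j => (m, j)) (seq 0 m').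
Proof.
  unfold all_pairs. rewrite seq_S, flat_map_app. simpl. rewrite app_nil_r. reflexivity.
Qed.

Lemma al_subseqs m : forall m' pi, is_alignment m m' pi -> In pi (subseqs (all_pairs m m')).
Proof.
  induction m as [|m IH]; intros m' pi Hpi.
  - rewrite (al_0 _ _ Hpi). apply subseqs_nil.
  - rewrite all_pairs_S. destruct pi as [|q0 pi0] using rev_ind.
    + apply subseqs_nil.
    + clear IHpi0. destruct Hpi as [H1 [H2 H3]].
      rewrite map_app in H1, H2. simpl in H1, H2.
      apply incr_app_inv in H1. apply incr_app_inv in H2.
      destruct H1 as [I1 F1]. destruct H2 as [I2 F2].
      rewrite Forall_app in H3. destruct H3 as [H3 H4]. inversion H4; subst.
      rewrite Forall_map in F1, F2.
      destruct (Nat.eq_dec (fst q0) m) as [E|E].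
      * apply subseqs_app.
        -- apply IH with (m' := m'). repeat split; auto.
           rewrite Forall_forall in *. intros q Hq. specialize (F1 _ Hq). specialize (H3 _ Hq). lia.
        -- apply subseqs_single. destruct q0 as [u v]; simpl in *; subst.
           apply in_map. apply in_seq. lia.
      * rewrite <- app_nil_r at 1. apply subseqs_app; [|apply subseqs_nil].
        apply IH with (m' := m'). repeat split.
        -- rewrite map_app. simpl.
           clear -I1 F1. induction pi0 as [|a l IHl]; simpl; auto.
           destruct l as [|b l]; simpl in *; auto.
           ++ inversion F1; subst. split; auto.
           ++ destruct I1 as [J1 J2]. split; auto. apply IHl; auto. inversion F1; auto.
        -- rewrite map_app. simpl.
           clear -I2 F2. induction pi0 as [|a l IHl]; simpl; auto.
           destruct l as [|b l]; simpl in *; auto.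
           ++ inversion F2; subst. split; auto.
           ++ destruct I2 as [J1 J2]. split; auto. apply IHl; auto. inversion F2; auto.
        -- rewrite Forall_app. split.
           ++ rewrite Forall_forall in *. intros q Hq. specialize (F1 _ Hq). specialize (H3 _ Hq). simpl in *. lia.
           ++ constructor; [|constructor]. simpl in *. lia.
Qed.

Lemma al_in_alignments m m' pi : is_alignment m m' pi -> In pi (alignments m m').
Proof.
  intros H. unfold alignments. apply filter_In. split.
  - apply al_subseqs; auto.
  - destruct (is_alignment_dec m m' pi); auto.
Qed.

Lemma in_alignments m m' pi : In pi (alignments m m') -> is_alignment m m' pi.
Proof.
  unfold alignments. intros H. apply filter_In in H. destruct H as [_ H].
  destruct (is_alignment_dec m m' pi); auto. discriminate.
Qed.

Lemma fold_Rmax_le (l : list R) b M : b <= M -> (forall x, In x l -> x <= M) -> fold_right Rmax b l <= M.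
Proof.
  induction l; simpl; intros H1 H2; auto.
  apply Rmax_lub; auto.
Qed.

Lemma fold_Rmax_ge (l : list R) b x : In x l -> x <= fold_right Rmax b l.
Proof.
  induction l; simpl; intros H; [destruct H|].
  destruct H as [<-|H]; [apply Rmax_l|]. eapply Rle_trans; [apply IHl; auto|apply Rmax_r].
Qed.

Theorem LS_Lr Sc x y : LS Sc x y = Lr Sc x y.
Proof.
  apply Rle_antisym.
  - unfold LS. apply fold_Rmax_le.
    + apply score_le_Lr. apply al_nil.
    + intros r Hr. apply in_map_iff in Hr. destruct Hr as [pi [<- Hpi]].
      apply score_le_Lr. apply in_alignments. auto.
  - destruct (Lr_attained Sc x y) as [pi [H E]]. rewrite <- E.
    unfold LS. apply fold_Rmax_ge. apply in_map. apply al_in_alignments; auto.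
Qed.

End PA.
Import PA.

Module PC.

Lemma Lr_gx Sc a x y : Sc (Some a) None + Lr Sc x y <= Lr Sc (a::x) y.
Proof.
  destruct y as [|b y].
  - rewrite Lr_cn. lra.
  - rewrite Lr_cc. eapply Rle_trans; [|apply Rmax_r]. apply Rmax_l.
Qed.

Lemma Lr_gy Sc b x y : Sc None (Some b) + Lr Sc x y <= Lr Sc x (b::y).
Proof.
  destruct x as [|a x].
  - rewrite Lr_nc. lra.
  - rewrite Lr_cc. eapply Rle_trans; [|apply Rmax_r]. apply Rmax_r.
Qed.

Lemma Lr_m Sc a b x y : Sc (Some a) (Some b) + Lr Sc x y <= Lr Sc (a::x) (b::y).
Proof. rewrite Lr_cc. apply Rmax_l. Qed.

Lemma Lr_superadd Sc x1 : forall y1 x2 y2,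
  Lr Sc x1 y1 + Lr Sc x2 y2 <= Lr Sc (x1 ++ x2) (y1 ++ y2).
Proof.
  induction x1 as [|a x1 IHx]; intros y1; induction y1 as [|b y1 IHy]; intros x2 y2.
  - rewrite Lr_nn. simpl. lra.
  - rewrite Lr_nc. simpl app. specialize (IHy x2 y2). simpl app in IHy.
    pose proof (Lr_gy Sc b x2 (y1 ++ y2)). lra.
  - rewrite Lr_cn. specialize (IHx [] x2 y2). simpl app in *.
    pose proof (Lr_gx Sc a (x1 ++ x2) y2). lra.
  - rewrite Lr_cc. simpl app. rewrite Lr_cc.
    apply Rmax_case.
    + specialize (IHx y1 x2 y2). apply Rle_trans with (Sc (Some a) (Some b) + Lr Sc (x1 ++ x2) (y1 ++ y2)); [lra|apply Rmax_l].
    + apply Rmax_case.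
      * specialize (IHx (b::y1) x2 y2). simpl app in IHx.
        eapply Rle_trans; [|apply Rmax_r]. eapply Rle_trans; [|apply Rmax_l]. lra.
      * specialize (IHy x2 y2). simpl app in IHy.
        eapply Rle_trans; [|apply Rmax_r]. eapply Rle_trans; [|apply Rmax_r]. lra.
Qed.

Definition cutP Sc x y s := exists x1 x2 y1 y2, x = x1 ++ x2 /\ y = y1 ++ y2 /\
    (length x1 + length y1 = s \/ length x1 + length y1 + 1 = s)%nat /\
    Lr Sc x y <= Lr Sc x1 y1 + Lr Sc x2 y2.

Lemma cutP0 Sc x y : cutP Sc x y 0.
Proof. exists [], x, [], y. repeat split; auto. rewrite Lr_nn. lra. Qed.

Lemma Lr_cut Sc x : forall y s, (s <= length x + length y)%nat -> cutP Sc x y s.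
Proof.
  induction x as [|a x IHx]; intros y; induction y as [|b y IHy]; intros s Hs;
    (destruct s as [|s]; [apply cutP0|]); simpl length in Hs.
  - lia.
  - destruct (IHy s ltac:(lia)) as [x1 [x2 [y1 [y2 [E1 [E2 [E3 E4]]]]]]].
    symmetry in E1. apply app_eq_nil in E1. destruct E1; subst.
    exists [], [], (b::y1), y2. repeat split; auto.
    + simpl in *; lia.
    + subst. rewrite Lr_nc. simpl app. rewrite Lr_nc. lra.
  - destruct (IHx [] s ltac:(simpl; lia)) as [x1 [x2 [y1 [y2 [E1 [E2 [E3 E4]]]]]]].
    symmetry in E2. apply app_eq_nil in E2. destruct E2; subst.
    exists (a::x1), x2, [], []. repeat split; auto.
    + simpl in *; lia.
    + rewrite Lr_cn. pose proof (Lr_gx Sc a x1 []). lra.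
  - pose proof (Lr_cc Sc a x b y) as HL. destruct (Rmax_or (Sc (Some a) (Some b) + Lr Sc x y)
       (Rmax (Sc (Some a) None + Lr Sc x (b :: y)) (Sc None (Some b) + Lr Sc (a :: x) y))) as [E|E]; rewrite E in HL.
    + destruct s as [|s].
      * exists [], (a::x), [], (b::y). repeat split; auto. rewrite Lr_nn. lra.
      * destruct (IHx y s ltac:(lia)) as [x1 [x2 [y1 [y2 [E1 [E2 [E3 E4]]]]]]].
        exists (a::x1), x2, (b::y1), y2. repeat split; try (subst; reflexivity).
        -- simpl; lia.
        -- subst. pose proof (Lr_m Sc a b x1 y1). simpl app. lra.
    + destruct (Rmax_or (Sc (Some a) None + Lr Sc x (b :: y)) (Sc None (Some b) + Lr Sc (a :: x) y)) as [E'|E']; rewrite E' in HL.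
      * destruct (IHx (b::y) s ltac:(simpl; lia)) as [x1 [x2 [y1 [y2 [E1 [E2 [E3 E4]]]]]]].
        exists (a::x1), x2, y1, y2. repeat split; try (subst; reflexivity); auto.
        -- simpl; lia.
        -- subst. pose proof (Lr_gx Sc a x1 y1). simpl app. lra.
      * destruct (IHy s ltac:(simpl; lia)) as [x1 [x2 [y1 [y2 [E1 [E2 [E3 E4]]]]]]].
        exists x1, x2, (b::y1), y2. repeat split; try (subst; reflexivity); auto.
        -- simpl; lia.
        -- subst. pose proof (Lr_gy Sc b x1 y1). simpl app. lra.
Qed.

Fixpoint cutL Sc (j : list (nat*nat)) (x y : list nat) : R :=
  match j with
  | [] => 0
  | (a,b) :: j' => Lr Sc (firstn a x) (firstn b y) + cutL Sc j' (skipn a x) (skipn b y)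
  end.

Fixpoint sfst (j : list (nat*nat)) : nat := match j with [] => 0%nat | q :: j' => (fst q + sfst j')%nat end.
Fixpoint ssnd (j : list (nat*nat)) : nat := match j with [] => 0%nat | q :: j' => (snd q + ssnd j')%nat end.

Lemma Lr_multicut Sc n (Hn : (1 <= n)%nat) q : (1 <= q)%nat -> forall e x y, (e <= 1)%nat ->
  (length x + length y = q * n + e)%nat ->
  exists j, length j = q /\ Forall (fun ab => n <= fst ab + snd ab + 1 /\ fst ab + snd ab <= n + 1)%nat j
    /\ sfst j = length x /\ ssnd j = length y /\ Lr Sc x y <= cutL Sc j x y.
Proof.
  induction q as [|q IH]; intros Hq e x y He Hl; [lia|].
  destruct q as [|q].
  - exists [(length x, length y)]. repeat split; simpl; try lia.
    + constructor; [simpl; lia| constructor].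
    + rewrite !firstn_all. lra.
  - destruct (Lr_cut Sc x y (n + e) ltac:(lia)) as [x1 [x2 [y1 [y2 [E1 [E2 [E3 E4]]]]]]].
    subst x y. rewrite !length_app in Hl.
    destruct (IH ltac:(lia) (n + e - (length x1 + length y1))%nat x2 y2 ltac:(lia) ltac:(lia))
      as [j [J1 [J2 [J3 [J4 J5]]]]].
    exists ((length x1, length y1) :: j). repeat split; simpl.
    + lia.
    + constructor; auto. simpl. lia.
    + rewrite length_app; lia.
    + rewrite length_app; lia.
    + rewrite !firstn_app, !firstn_all, !Nat.sub_diag, !firstn_O, !app_nil_r.
      rewrite !skipn_app, !skipn_all, !Nat.sub_diag, !skipn_O. simpl. lra.
Qed.

Definition okw k (x : list nat) := Forall (fun a => (a < k)%nat) x.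

Lemma maxl_ge l x : In x l -> x <= maxl l.
Proof. apply fold_Rmax_ge. Qed.

Lemma maxl_nonneg l : 0 <= maxl l.
Proof. induction l; simpl; [lra|]. eapply Rle_trans; [exact IHl| apply Rmax_r]. Qed.

Lemma inA_Astar k c : inA k c -> In c (Astar k).
Proof.
  destruct c as [a|]; simpl; intros H; [right|left; auto].
  apply in_map. apply in_seq. lia.
Qed.

Section Props.
Variable k : nat.
Variable Sc : scoring.
Hypothesis Hsym : is_scoring k Sc.
Let I := norm_inf k Sc.
Let D := norm_delta k Sc.

Lemma Sbound c d : inA k c -> inA k d -> Rabs (Sc c d) <= I.
Proof.
  intros Hc Hd. unfold I, norm_inf. apply maxl_ge. apply in_flat_map. exists c. split.
  - apply inA_Astar; auto.
  - apply in_map_iff. exists d. split; auto. apply inA_Astar; auto.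
Qed.

Lemma Dbound c d e : inA k c -> inA k d -> inA k e -> Rabs (Sc c d - Sc c e) <= D.
Proof.
  intros Hc Hd He. unfold D, norm_delta. apply maxl_ge. apply in_flat_map. exists c. split.
  - apply inA_Astar; auto.
  - apply in_flat_map. exists d. split; [apply inA_Astar; auto|].
    apply in_map_iff. exists e. split; auto. apply inA_Astar; auto.
Qed.

Lemma I_nonneg : 0 <= I.
Proof. apply maxl_nonneg. Qed.

Lemma D_nonneg : 0 <= D.
Proof. apply maxl_nonneg. Qed.

Lemma Sb c d : inA k c -> inA k d -> - I <= Sc c d <= I.
Proof. intros H1 H2. pose proof (Sbound c d H1 H2). split_Rabs; lra. Qed.

Ltac sb c d := let H := fresh "HS" in pose proof (Sb c d ltac:(simpl; auto) ltac:(simpl; auto)) as H.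

Lemma R1y x b y : okw k x -> (b < k)%nat -> Lr Sc x (b::y) <= Lr Sc x y + 2 * I.
Proof.
  intros Hx Hb. induction x as [|a x IH].
  - rewrite Lr_nc. sb (@None nat) (Some b). lra.
  - inversion Hx as [|? ? Ha Hx']; subst. rewrite Lr_cc.
    sb (Some a) (Some b). sb (Some a) (@None nat). sb (@None nat) (Some b).
    pose proof (Lr_gx Sc a x y). specialize (IH Hx').
    repeat apply Rmax_lub; lra.
Qed.

Lemma R1x a x y : okw k y -> (a < k)%nat -> Lr Sc (a::x) y <= Lr Sc x y + 2 * I.
Proof.
  intros Hy Ha. induction y as [|b y IH].
  - rewrite Lr_cn. sb (Some a) (@None nat). lra.
  - inversion Hy as [|? ? Hb Hy']; subst. rewrite Lr_cc.
    sb (Some a) (Some b). sb (Some a) (@None nat). sb (@None nat) (Some b).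
    pose proof (Lr_gy Sc b x y). specialize (IH Hy').
    repeat apply Rmax_lub; lra.
Qed.

Lemma C3 a x b y : okw k x -> okw k y -> (a < k)%nat -> (b < k)%nat ->
  Lr Sc (a::x) (b::y) <= Lr Sc x y + 3 * I.
Proof.
  intros Hx Hy Ha Hb. rewrite Lr_cc.
  sb (Some a) (Some b). sb (Some a) (@None nat). sb (@None nat) (Some b).
  pose proof (R1y x b y Hx Hb). pose proof (R1x a x y Hy Ha).
  repeat apply Rmax_lub; lra.
Qed.

Lemma Lr_lower x : forall y, okw k x -> okw k y -> - (INR (length x + length y)) * I <= Lr Sc x y.
Proof.
  induction x as [|a x IHx]; intros y; induction y as [|b y IHy]; intros Hx Hy.
  - rewrite Lr_nn. simpl. lra.
  - rewrite Lr_nc. inversion Hy; subst. sb (@None nat) (Some b). specialize (IHy Hx ltac:(auto)).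
    simpl length in *. repeat rewrite ?plus_INR, ?S_INR in *. nra.
  - inversion Hx; subst. pose proof (Lr_gx Sc a x []). sb (Some a) (@None nat).
    specialize (IHx [] ltac:(auto) Hy). simpl length in *. repeat rewrite ?plus_INR, ?S_INR in *. nra.
  - inversion Hx; subst. pose proof (Lr_gx Sc a x (b::y)). sb (Some a) (@None nat).
    specialize (IHx (b::y) ltac:(auto) Hy). simpl length in *. repeat rewrite ?plus_INR, ?S_INR in *. nra.
Qed.

Lemma Lr_upper x : forall y, okw k x -> okw k y -> Lr Sc x y <= (INR (length x + length y)) * I.
Proof.
  pose proof I_nonneg.
  induction x as [|a x IHx]; intros y; induction y as [|b y IHy]; intros Hx Hy.
  - rewrite Lr_nn. simpl. lra.
  - rewrite Lr_nc. inversion Hy; subst. sb (@None nat) (Some b). specialize (IHy Hx ltac:(auto)).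
    simpl length in *. repeat rewrite ?plus_INR, ?S_INR in *. nra.
  - rewrite Lr_cn. inversion Hx; subst. sb (Some a) (@None nat).
    specialize (IHx [] ltac:(auto) Hy). simpl length in *. repeat rewrite ?plus_INR, ?S_INR in *. nra.
  - inversion Hx; subst. inversion Hy; subst. rewrite Lr_cc.
    sb (Some a) (Some b). sb (Some a) (@None nat). sb (@None nat) (Some b).
    pose proof (IHx y ltac:(auto) ltac:(auto)). pose proof (IHx (b::y) ltac:(auto) Hy).
    specialize (IHy Hx ltac:(auto)). simpl length in *. repeat rewrite ?plus_INR, ?S_INR in *.
    repeat apply Rmax_lub; nra.
Qed.

Lemma Lr_sym x : forall y, okw k x -> okw k y -> Lr Sc x y = Lr Sc y x.
Proof.
  induction x as [|a x IHx]; intros y; induction y as [|b y IHy]; intros Hx Hy.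
  - reflexivity.
  - inversion Hy; subst. rewrite Lr_nc, Lr_cn. rewrite IHy by auto.
    rewrite (Hsym None (Some b)) by (simpl; auto). reflexivity.
  - inversion Hx; subst. rewrite Lr_nc, Lr_cn. rewrite (IHx []) by auto.
    rewrite (Hsym None (Some a)) by (simpl; auto). reflexivity.
  - inversion Hx; subst. inversion Hy; subst. rewrite !Lr_cc.
    rewrite (IHx y), (IHx (b::y)), IHy by auto.
    rewrite (Hsym (Some a) (Some b)), (Hsym (Some a) None), (Hsym None (Some b)) by (simpl; auto).
    rewrite (Rmax_comm (Sc None (Some a) + _)). reflexivity.
Qed.

Lemma Rmax_close A B A' B' d : Rabs (A - A') <= d -> Rabs (B - B') <= d -> Rabs (Rmax A B - Rmax A' B') <= d.
Proof. intros H1 H2. unfold Rmax. destruct (Rle_dec A B), (Rle_dec A' B'); split_Rabs; lra. Qed.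

Lemma Dsym c d e : inA k c -> inA k d -> inA k e -> Rabs (Sc d c - Sc e c) <= D.
Proof.
  intros. rewrite (Hsym d c), (Hsym e c) by auto. apply Dbound; auto.
Qed.

Lemma Lr_change_x u : forall a b v y, okw k u -> okw k v -> okw k y -> (a < k)%nat -> (b < k)%nat ->
  Rabs (Lr Sc (u ++ a :: v) y - Lr Sc (u ++ b :: v) y) <= D.
Proof.
  induction u as [|c u IHu]; intros a b v y Hu Hv Hy Ha Hb; simpl app.
  - induction y as [|d y IHy].
    + rewrite !Lr_cn. pose proof (Dsym None (Some a) (Some b) ltac:(simpl; auto) ltac:(simpl; auto) ltac:(simpl; auto)).
      replace (Sc (Some a) None + Lr Sc v [] - (Sc (Some b) None + Lr Sc v [])) with (Sc (Some a) None - Sc (Some b) None) by ring. auto.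
    + inversion Hy; subst. rewrite !Lr_cc. apply Rmax_close; [|apply Rmax_close].
      * pose proof (Dsym (Some d) (Some a) (Some b) ltac:(simpl; auto) ltac:(simpl; auto) ltac:(simpl; auto)).
        replace (Sc (Some a) (Some d) + Lr Sc v y - (Sc (Some b) (Some d) + Lr Sc v y)) with (Sc (Some a) (Some d) - Sc (Some b) (Some d)) by ring. auto.
      * pose proof (Dsym None (Some a) (Some b) ltac:(simpl; auto) ltac:(simpl; auto) ltac:(simpl; auto)).
        replace (Sc (Some a) None + Lr Sc v (d :: y) - (Sc (Some b) None + Lr Sc v (d :: y))) with (Sc (Some a) None - Sc (Some b) None) by ring. auto.
      * replace (Sc None (Some d) + Lr Sc (a :: v) y - (Sc None (Some d) + Lr Sc (b :: v) y)) with (Lr Sc (a :: v) y - Lr Sc (b :: v) y) by ring. auto.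
  - inversion Hu; subst. induction y as [|d y IHy].
    + rewrite !Lr_cn.
      replace (Sc (Some c) None + Lr Sc (u ++ a :: v) [] - (Sc (Some c) None + Lr Sc (u ++ b :: v) [])) with (Lr Sc (u ++ a :: v) [] - Lr Sc (u ++ b :: v) []) by ring.
      apply IHu; auto.
    + inversion Hy; subst. rewrite !Lr_cc. apply Rmax_close; [|apply Rmax_close].
      * replace (Sc (Some c) (Some d) + Lr Sc (u ++ a :: v) y - (Sc (Some c) (Some d) + Lr Sc (u ++ b :: v) y)) with (Lr Sc (u ++ a :: v) y - Lr Sc (u ++ b :: v) y) by ring. apply IHu; auto.
      * replace (Sc (Some c) None + Lr Sc (u ++ a :: v) (d :: y) - (Sc (Some c) None + Lr Sc (u ++ b :: v) (d :: y))) with (Lr Sc (u ++ a :: v) (d :: y) - Lr Sc (u ++ b :: v) (d :: y)) by ring. apply IHu; auto.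
      * replace (Sc None (Some d) + Lr Sc (c :: u ++ a :: v) y - (Sc None (Some d) + Lr Sc (c :: u ++ b :: v) y)) with (Lr Sc (c :: u ++ a :: v) y - Lr Sc (c :: u ++ b :: v) y) by ring. auto.
Qed.

Lemma okw_app x y : okw k x -> okw k y -> okw k (x ++ y).
Proof. intros. apply Forall_app; auto. Qed.

Lemma Lr_change_y u : forall a b v x, okw k u -> okw k v -> okw k x -> (a < k)%nat -> (b < k)%nat ->
  Rabs (Lr Sc x (u ++ a :: v) - Lr Sc x (u ++ b :: v)) <= D.
Proof.
  intros a b v x Hu Hv Hx Ha Hb.
  rewrite (Lr_sym x (u ++ a :: v)), (Lr_sym x (u ++ b :: v)); auto;
   try (apply okw_app; auto; constructor; auto).
  apply Lr_change_x; auto.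
Qed.

End Props.

End PC.
Import PC.

Module PB.

Lemma sumR_plus {A} (f g : A -> R) l : sumR (map (fun x => f x + g x) l) = sumR (map f l) + sumR (map g l).
Proof. induction l; simpl; [ring|rewrite IHl; ring]. Qed.

Lemma sumR_scal {A} c (f : A -> R) l : sumR (map (fun x => c * f x) l) = c * sumR (map f l).
Proof. induction l; simpl; [ring|rewrite IHl; ring]. Qed.

Lemma sumR_le {A} (f g : A -> R) l : (forall x, In x l -> f x <= g x) -> sumR (map f l) <= sumR (map g l).
Proof. induction l; simpl; intros H; [lra|]. pose proof (H a (or_introl eq_refl)). pose proof (IHl (fun x Hx => H x (or_intror Hx))). lra. Qed.

Lemma sumR_nonneg {A} (f : A -> R) l : (forall x, In x l -> 0 <= f x) -> 0 <= sumR (map f l).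
Proof. intros H.
  induction l; simpl in *; [lra|]. pose proof (H a (or_introl eq_refl)).
  pose proof (IHl (fun x Hx => H x (or_intror Hx))). lra. Qed.

Lemma sumR_flat_map {A B} (h : B -> R) (f : A -> list B) l :
  sumR (map h (flat_map f l)) = sumR (map (fun x => sumR (map h (f x))) l).
Proof. induction l; simpl; [reflexivity|]. rewrite map_app, sumR_app, IHl. reflexivity. Qed.

Lemma sumR_flat_map' {A} (f : A -> list R) l :
  sumR (flat_map f l) = sumR (map (fun x => sumR (f x)) l).
Proof. induction l; simpl; [reflexivity|]. rewrite sumR_app, IHl. reflexivity. Qed.

Lemma sumR_swap {A B} (F : A -> B -> R) l1 l2 :
  sumR (map (fun x => sumR (map (fun y => F x y) l2)) l1) = sumR (map (fun y => sumR (map (fun x => F x y) l1)) l2).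
Proof.
  induction l1; simpl.
  - induction l2; simpl; [reflexivity|]. rewrite <- IHl2. ring.
  - rewrite IHl1. rewrite <- sumR_plus. reflexivity.
Qed.

Lemma words_spec k n x : In x (words k n) -> length x = n /\ okw k x.
Proof.
  revert x; induction n as [|n IH]; simpl; intros x H.
  - destruct H as [<-|[]]. split; [reflexivity|constructor].
  - apply in_flat_map in H. destruct H as [a [Ha H]]. apply in_map_iff in H. destruct H as [x' [<- Hx']].
    destruct (IH _ Hx'). apply in_seq in Ha. split; simpl; [lia|]. constructor; auto; lia.
Qed.

Section Expect.
Variable k : nat.
Variable p : nat -> R.
Hypothesis Hp : is_distribution k p.

Definition Ew n (g : list nat -> R) := sumR (map (fun x => word_prob p x * g x) (words k n)).

Lemma wp_nonneg x : okw k x -> 0 <= word_prob p x.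
Proof.
  induction x; intros H; [unfold word_prob; simpl; lra|]. inversion H; subst.
  change (word_prob p (a::x)) with (p a * word_prob p x).
  destruct Hp as [Hp1 _]. apply Rmult_le_pos; auto.
Qed.

Lemma Ew_ext n g h : (forall x, length x = n -> okw k x -> g x = h x) -> Ew n g = Ew n h.
Proof.
  intros H. unfold Ew. apply sumR_ext. intros x Hx. destruct (words_spec _ _ _ Hx). rewrite H; auto.
Qed.

Lemma Ew_S n g : Ew (S n) g = sumR (map (fun c => p c * Ew n (fun x => g (c::x))) (seq 0 k)).
Proof.
  unfold Ew. simpl words. rewrite sumR_flat_map. apply sumR_ext. intros c _.
  rewrite map_map. rewrite <- sumR_scal. apply sumR_ext. intros x _.
  unfold word_prob. simpl. ring.
Qed.

Lemma Ew_O g : Ew 0 g = g [].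
Proof. unfold Ew. simpl. unfold word_prob. simpl. ring. Qed.

Lemma Ew_plus n f g : Ew n (fun x => f x + g x) = Ew n f + Ew n g.
Proof. unfold Ew. rewrite <- sumR_plus. apply sumR_ext. intros; ring. Qed.

Lemma Ew_scal n c f : Ew n (fun x => c * f x) = c * Ew n f.
Proof. unfold Ew. rewrite <- sumR_scal. apply sumR_ext. intros; ring. Qed.

Lemma Ew_le n f g : (forall x, length x = n -> okw k x -> f x <= g x) -> Ew n f <= Ew n g.
Proof.
  intros H. unfold Ew. apply sumR_le. intros x Hx. destruct (words_spec _ _ _ Hx).
  pose proof (wp_nonneg x H1). specialize (H x H0 H1). nra.
Qed.

Lemma Ew_const n c : Ew n (fun _ => c) = c.
Proof.
  induction n as [|n IH].
  - rewrite Ew_O. reflexivity.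
  - rewrite Ew_S. rewrite IH. destruct Hp as [_ H2].
    rewrite (sumR_ext _ (fun x => c * p x)) by (intros; ring). rewrite sumR_scal, H2. ring.
Qed.

Lemma Ew_app a b g : Ew (a + b) g = Ew a (fun x1 => Ew b (fun x2 => g (x1 ++ x2))).
Proof.
  revert g; induction a as [|a IH]; intros g.
  - rewrite Ew_O. reflexivity.
  - simpl plus. rewrite !Ew_S. apply sumR_ext. intros c _. rewrite IH. reflexivity.
Qed.

Lemma Ew_swap a b (g : list nat -> list nat -> R) :
  Ew a (fun x => Ew b (fun y => g x y)) = Ew b (fun y => Ew a (fun x => g x y)).
Proof.
  unfold Ew. rewrite (sumR_ext (fun x => word_prob p x * sumR (map (fun x0 => word_prob p x0 * g x x0) (words k b)))
     (fun x => sumR (map (fun y => word_prob p x * (word_prob p y * g x y)) (words k b)))).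
  2:{ intros. rewrite sumR_scal. reflexivity. }
  rewrite sumR_swap. apply sumR_ext. intros y _. rewrite <- sumR_scal. apply sumR_ext. intros; ring.
Qed.

Definition E2 a b (g : list nat -> list nat -> R) := Ew a (fun x => Ew b (fun y => g x y)).

Lemma E2_ext a b f g : (forall x y, length x = a -> length y = b -> okw k x -> okw k y -> f x y = g x y) -> E2 a b f = E2 a b g.
Proof. intros H. apply Ew_ext. intros. apply Ew_ext. intros. auto. Qed.

Lemma E2_le a b f g : (forall x y, length x = a -> length y = b -> okw k x -> okw k y -> f x y <= g x y) -> E2 a b f <= E2 a b g.
Proof. intros H. apply Ew_le. intros. apply Ew_le. intros. auto. Qed.

Lemma E2_plus a b f g : E2 a b (fun x y => f x y + g x y) = E2 a b f + E2 a b g.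
Proof. unfold E2. rewrite <- Ew_plus. apply Ew_ext. intros. apply Ew_plus. Qed.

Lemma E2_const a b c : E2 a b (fun _ _ => c) = c.
Proof. unfold E2. rewrite (Ew_ext _ _ (fun _ => c)); [apply Ew_const|]. intros. apply Ew_const. Qed.

Lemma E2_swap a b g : E2 a b g = E2 b a (fun y x => g x y).
Proof. unfold E2. apply Ew_swap. Qed.

Lemma ELn_E2 Sc n : ELn k p Sc n = E2 n n (Lr Sc).
Proof.
  unfold ELn, E2, Ew. rewrite sumR_flat_map'. apply sumR_ext. intros x _.
  rewrite <- sumR_scal. apply sumR_ext. intros y _. rewrite LS_Lr. ring.
Qed.

End Expect.

End PB.
Import PB.

Module PH.
Import Coquelicot.Coquelicot.

Lemma exp_le x y : x <= y -> exp x <= exp y.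
Proof. intros [H|H]; [left; apply exp_increasing; auto| subst; lra]. Qed.

Lemma ln_le x y : 0 < x -> x <= y -> ln x <= ln y.
Proof. intros H0 [H|H]; [left; apply ln_increasing; auto| subst; lra]. Qed.

Section H.
Variable q : R.
Hypothesis Hq : 0 <= q <= 1.

Definition den u := 1 - q + q * exp u.
Lemma den_pos u : 0 <= u -> 1 <= den u.
Proof. intros Hu. unfold den. pose proof (exp_ineq1_le u). nra. Qed.
Lemma den_pos' u : 0 < den u.
Proof. unfold den. pose proof (exp_pos u). destruct (Req_dec q 0); [subst; lra|].
  assert (0 < q * exp u) by (apply Rmult_lt_0_compat; lra). lra. Qed.

Definition psi u := u^2/8 + q*u - ln (den u).
Definition dpsi u := u/4 + q - q * exp u / den u.
Definition ddpsi u := /4 - q * exp u * (1 - q) / (den u)^2.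

Lemma psi_der u : is_derive psi u (dpsi u).
Proof.
  unfold psi, dpsi, den. pose proof (den_pos' u). unfold den in H.
  auto_derive.
  - lra.
  - field. lra.
Qed.

Lemma dpsi_der u : is_derive dpsi u (ddpsi u).
Proof.
  unfold dpsi, ddpsi, den. pose proof (den_pos' u). unfold den in H.
  auto_derive.
  - lra.
  - field. lra.
Qed.

Lemma ddpsi_nonneg u : 0 <= ddpsi u.
Proof.
  unfold ddpsi. pose proof (den_pos' u). unfold den in *.
  pose proof (exp_pos u).
  assert (q * exp u * (1 - q) <= (1 - q + q * exp u)^2 / 4).
  { assert (0 <= (q * exp u - (1 - q))^2) by apply pow2_ge_0. nra. }
  assert (q * exp u * (1 - q) / (1 - q + q * exp u) ^ 2 <= /4).
  { apply Rmult_le_reg_r with ((1 - q + q * exp u) ^ 2). { apply pow_lt; lra. }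
    unfold Rdiv. rewrite Rmult_assoc, Rinv_l. 2:{ apply pow_nonzero; lra. } lra. }
  lra.
Qed.

Lemma dpsi_nonneg u : 0 <= u -> 0 <= dpsi u.
Proof.
  intros Hu. destruct (Req_dec u 0) as [E|E].
  - rewrite E. assert (dpsi 0 = 0) as H0 by (unfold dpsi, den; rewrite exp_0; field; lra). lra. 
  - destruct (MVT_gen dpsi 0 u ddpsi) as [c [Hc Hm]].
    + intros. apply dpsi_der.
    + intros. apply continuity_pt_filterlim. apply (@ex_derive_continuous R_AbsRing R_NormedModule). eexists. apply dpsi_der.
    + rewrite Rmin_left in Hc by lra. rewrite Rmax_right in Hc by lra.
      assert (dpsi 0 = 0) by (unfold dpsi, den; rewrite exp_0; field; lra).
      pose proof (ddpsi_nonneg c). nra.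
Qed.

Lemma psi_nonneg u : 0 <= u -> 0 <= psi u.
Proof.
  intros Hu. destruct (Req_dec u 0) as [E|E].
  - rewrite E. unfold psi, den. rewrite exp_0. replace (1 - q + q * 1) with 1 by ring. rewrite ln_1. lra.
  - destruct (MVT_gen psi 0 u dpsi) as [c [Hc Hm]].
    + intros. apply psi_der.
    + intros. apply continuity_pt_filterlim. apply (@ex_derive_continuous R_AbsRing R_NormedModule). eexists. apply psi_der.
    + rewrite Rmin_left in Hc by lra. rewrite Rmax_right in Hc by lra.
      assert (psi 0 = 0) by (unfold psi, den; rewrite exp_0; replace (1 - q + q * 1) with 1 by ring; rewrite ln_1; lra).
      pose proof (dpsi_nonneg c ltac:(lra)). nra.
Qed.

End H.

Lemma hoeff_core q u : 0 <= q <= 1 -> 0 <= u -> exp (- q * u) * (1 - q + q * exp u) <= exp (u^2/8).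
Proof.
  intros Hq Hu. pose proof (psi_nonneg q Hq u Hu). unfold psi in H.
  pose proof (den_pos' q Hq u). unfold den in *.
  rewrite <- (exp_ln (1 - q + q * exp u)) by lra. rewrite <- exp_plus.
  apply exp_le. lra.
Qed.

End PH.
Import PH.

Module PM.

Lemma chord th lo hi v : lo < hi -> lo <= v <= hi ->
  exp (th * v) <= ((hi - v) * exp (th * lo) + (v - lo) * exp (th * hi)) / (hi - lo).
Proof.
  intros H1 H2.
  assert (E1 : exp (th * lo) = exp (th * v) * exp (th * (lo - v))) by (rewrite <- exp_plus; f_equal; ring).
  assert (E2 : exp (th * hi) = exp (th * v) * exp (th * (hi - v))) by (rewrite <- exp_plus; f_equal; ring).
  pose proof (exp_ineq1_le (th * (lo - v))). pose proof (exp_ineq1_le (th * (hi - v))).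
  pose proof (exp_pos (th * v)).
  apply Rmult_le_reg_r with (hi - lo); [lra|]. unfold Rdiv. rewrite Rmult_assoc, Rinv_l by lra.
  rewrite E1, E2.
  assert (exp (th * v) * (hi - lo) = (hi - v) * (exp (th * v) * (1 + th * (lo - v))) + (v - lo) * (exp (th * v) * (1 + th * (hi - v)))) by ring.
  rewrite H4, Rmult_1_r.
  apply Rplus_le_compat; apply Rmult_le_compat_l; try lra; apply Rmult_le_compat_l; lra.
Qed.

Lemma fold_Rmin_le b l x : In x l -> fold_right Rmin b l <= x.
Proof.
  induction l; simpl; intros H; [destruct H|]. destruct H as [<-|H]; [apply Rmin_l|].
  eapply Rle_trans; [apply Rmin_r|auto].
Qed.

Lemma fold_Rmin_in b l : fold_right Rmin b l = b \/ In (fold_right Rmin b l) l.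
Proof.
  induction l; simpl; auto. destruct (Rle_dec a (fold_right Rmin b l)).
  - rewrite Rmin_left by lra. right; left; auto.
  - rewrite Rmin_right by lra. destruct IHl as [E|E]; [left; auto|right; right; auto].
Qed.

Section Hoeff.
Variable k : nat.
Variable p : nat -> R.
Hypothesis Hp : is_distribution k p.

Lemma k_pos : (1 <= k)%nat.
Proof. destruct Hp as [_ H]. destruct k; simpl in H; [lra|lia]. Qed.

Lemma sum_p_lin a b g : sumR (map (fun c => p c * (a + b * g c)) (seq 0 k)) = a + b * sumR (map (fun c => p c * g c) (seq 0 k)).
Proof.
  destruct Hp as [_ H]. rewrite (sumR_ext _ (fun c => a * p c + b * (p c * g c))) by (intros; ring).
  rewrite sumR_plus, !sumR_scal, H. ring.
Qed.

Lemma hoeff_disc g Dd th : (forall c d, (c < k)%nat -> (d < k)%nat -> g c - g d <= Dd) -> 0 <= th ->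
  sumR (map (fun c => p c * exp (th * (g c - sumR (map (fun c => p c * g c) (seq 0 k))))) (seq 0 k))
  <= exp (th^2 * Dd^2 / 8).
Proof.
  intros HD Hth. set (mu := sumR (map (fun c => p c * g c) (seq 0 k))).
  pose proof k_pos as Hk. destruct Hp as [Hp1 Hp2].
  set (lo := fold_right Rmin (g 0%nat) (map g (seq 0 k))).
  assert (Hlo : forall c, (c < k)%nat -> lo <= g c).
  { intros c Hc. apply fold_Rmin_le. apply in_map. apply in_seq; lia. }
  assert (Hhi : forall c, (c < k)%nat -> g c <= lo + Dd).
  { intros c Hc. destruct (fold_Rmin_in (g 0%nat) (map g (seq 0 k))) as [E|E].
    - fold lo in E. rewrite E. specialize (HD c 0%nat Hc ltac:(lia)). lra.
    - fold lo in E. apply in_map_iff in E. destruct E as [c0 [E Hc0]]. apply in_seq in Hc0.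
      rewrite <- E. specialize (HD c c0 Hc ltac:(lia)). lra. }
  assert (HDd : 0 <= Dd) by (specialize (HD 0%nat 0%nat ltac:(lia) ltac:(lia)); lra).
  assert (Hmu : lo <= mu <= lo + Dd).
  { split.
    - replace lo with (lo + 0 * mu) by ring. unfold mu at 1. rewrite <- sum_p_lin.
      unfold mu. apply sumR_le. intros c Hc. apply in_seq in Hc. specialize (Hp1 c ltac:(lia)).
      specialize (Hlo c ltac:(lia)). nra.
    - replace (lo + Dd) with ((lo + Dd) + 0 * mu) by ring. unfold mu at 2. rewrite <- sum_p_lin.
      unfold mu. apply sumR_le. intros c Hc. apply in_seq in Hc. specialize (Hp1 c ltac:(lia)).
      specialize (Hhi c ltac:(lia)). nra. }
  destruct (Req_dec Dd 0) as [E0|E0].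
  - rewrite (sumR_ext _ (fun c => p c * (1 + 0 * g c))).
    + rewrite sum_p_lin. rewrite E0. replace (th ^ 2 * 0 ^ 2 / 8) with 0 by (simpl; field). rewrite exp_0. lra.
    + intros c Hc. apply in_seq in Hc. specialize (Hlo c ltac:(lia)). specialize (Hhi c ltac:(lia)).
      replace (g c - mu) with 0 by lra. rewrite Rmult_0_r, exp_0. ring.
  - set (A := exp (- th * mu) * ((lo + Dd) * exp (th * lo) - lo * exp (th * (lo + Dd))) / Dd).
    set (B := exp (- th * mu) * (exp (th * (lo + Dd)) - exp (th * lo)) / Dd).
    apply Rle_trans with (sumR (map (fun c => p c * (A + B * g c)) (seq 0 k))).
    + apply sumR_le. intros c Hc. apply in_seq in Hc. specialize (Hp1 c ltac:(lia)).
      apply Rmult_le_compat_l; auto.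
      pose proof (chord th lo (lo + Dd) (g c) ltac:(lra) (conj (Hlo c ltac:(lia)) (Hhi c ltac:(lia)))).
      replace (th * (g c - mu)) with (- th * mu + th * g c) by ring. rewrite exp_plus.
      pose proof (exp_pos (- th * mu)).
      apply Rle_trans with (exp (- th * mu) * (((lo + Dd - g c) * exp (th * lo) + (g c - lo) * exp (th * (lo + Dd))) / (lo + Dd - lo))).
      * apply Rmult_le_compat_l; lra.
      * unfold A, B. right. field. lra.
    + rewrite sum_p_lin. fold mu.
      set (q := (mu - lo) / Dd). set (u := th * Dd).
      assert (Hq : 0 <= q <= 1).
      { unfold q. split.
        - apply Rmult_le_pos; [lra| left; apply Rinv_0_lt_compat; lra].
        - apply Rmult_le_reg_r with Dd; [lra|]. unfold Rdiv. rewrite Rmult_assoc, Rinv_l by lra. lra. }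
      assert (Hu : 0 <= u) by (unfold u; nra).
      pose proof (hoeff_core q u Hq Hu).
      replace (th ^ 2 * Dd ^ 2 / 8) with (u^2/8) by (unfold u; unfold Rdiv; ring).
      eapply Rle_trans; [|exact H]. right.
      unfold A, B.
      assert (exp (- th * mu) * exp (th * lo) = exp (- q * u)).
      { rewrite <- exp_plus. f_equal. unfold q, u. field. lra. }
      assert (exp (- th * mu) * exp (th * (lo + Dd)) = exp (- q * u) * exp u).
      { rewrite <- !exp_plus. f_equal. unfold q, u. field. lra. }
      apply Rmult_eq_reg_r with Dd; [|lra].
      unfold Rdiv.
      transitivity ((lo + Dd) * (exp (- th * mu) * exp (th * lo)) - lo * (exp (- th * mu) * exp (th * (lo + Dd)))
         + mu * ((exp (- th * mu) * exp (th * (lo + Dd))) - (exp (- th * mu) * exp (th * lo)))).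
      { field. lra. }
      rewrite H0, H1. unfold q. field. lra.
Qed.

End Hoeff.

Section McD.
Variable k : nat.
Variable p : nat -> R.
Hypothesis Hp : is_distribution k p.
Variable Dd : R.

Definition BD M (h : list nat -> R) := forall u v c d, okw k u -> okw k v -> (c < k)%nat -> (d < k)%nat ->
  (length u + S (length v) = M)%nat -> Rabs (h (u ++ c :: v) - h (u ++ d :: v)) <= Dd.

Lemma Ew_minus n f g : Ew k p n (fun x => f x - g x) = Ew k p n f - Ew k p n g.
Proof.
  rewrite (Ew_ext k p n _ (fun x => f x + (-1) * g x)) by (intros; ring).
  rewrite Ew_plus, Ew_scal. ring.
Qed.

Lemma mcd M : forall h, BD M h -> forall th, 0 <= th ->
  Ew k p M (fun z => exp (th * (h z - Ew k p M h))) <= exp (th^2 * INR M * Dd^2 / 8).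
Proof.
  induction M as [|M IH]; intros h HB th Hth.
  - rewrite !Ew_O. replace (th * (h [] - h [])) with 0 by ring.
    replace (th ^ 2 * INR 0 * Dd ^ 2 / 8) with 0 by (simpl; unfold Rdiv; ring). lra.
  - set (g := fun c => Ew k p M (fun z => h (c :: z))).
    assert (Emu : Ew k p (S M) h = sumR (map (fun c => p c * g c) (seq 0 k))) by (rewrite Ew_S; reflexivity).
    rewrite Emu. rewrite Ew_S.
    set (mu := sumR (map (fun c => p c * g c) (seq 0 k))).
    set (E := exp (th ^ 2 * INR M * Dd ^ 2 / 8)).
    apply Rle_trans with (sumR (map (fun c => E * (p c * exp (th * (g c - mu)))) (seq 0 k))).
    + apply sumR_le. intros c Hc. apply in_seq in Hc.
      destruct Hp as [Hp1 _]. specialize (Hp1 c ltac:(lia)).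
      rewrite (Ew_ext k p M _ (fun z => exp (th * (g c - mu)) * exp (th * (h (c::z) - g c)))).
      2:{ intros. rewrite <- exp_plus. f_equal. ring. }
      rewrite Ew_scal.
      assert (HBc : BD M (fun z => h (c :: z))).
      { intros u v c1 d1 Hu Hv Hc1 Hd1 Hl. apply (HB (c::u) v c1 d1); auto.
        - constructor; auto; lia.
        - simpl; lia. }
      specialize (IH _ HBc th Hth). fold (g c) in IH. fold E in IH.
      pose proof (exp_pos (th * (g c - mu))).
      assert (p c * (exp (th * (g c - mu)) * Ew k p M (fun x => exp (th * (h (c :: x) - g c))))
              <= p c * (exp (th * (g c - mu)) * E)).
      { apply Rmult_le_compat_l; auto. apply Rmult_le_compat_l; lra. }
      lra.
    + rewrite sumR_scal.
      assert (HD : forall c d, (c < k)%nat -> (d < k)%nat -> g c - g d <= Dd).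
      { intros c d Hc Hd. unfold g. rewrite <- Ew_minus.
        rewrite <- (Ew_const k p Hp M Dd). apply Ew_le; auto. intros z Hz Hok.
        specialize (HB [] z c d (Forall_nil _) Hok Hc Hd ltac:(simpl; lia)). simpl in HB.
        revert HB; split_Rabs; lra. }
      pose proof (hoeff_disc k p Hp g Dd th HD Hth). fold mu in H.
      unfold E. apply Rle_trans with (exp (th ^ 2 * INR M * Dd ^ 2 / 8) * exp (th ^ 2 * Dd ^ 2 / 8)).
      * apply Rmult_le_compat_l; [left; apply exp_pos|auto].
      * rewrite <- exp_plus. right. f_equal. rewrite S_INR. unfold Rdiv. ring.
Qed.

End McD.

End PM.
Import PM.

Module PF.

Lemma okw_firstn k n x : okw k x -> okw k (firstn n x).
Proof. intros H. rewrite <- (firstn_skipn n x) in H. apply Forall_app in H. tauto. Qed.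
Lemma okw_skipn k n x : okw k x -> okw k (skipn n x).
Proof. intros H. rewrite <- (firstn_skipn n x) in H. apply Forall_app in H. tauto. Qed.

Section Main.
Variable k : nat.
Variable p : nat -> R.
Hypothesis Hp : is_distribution k p.
Variable Sc : scoring.
Hypothesis Hsym : is_scoring k Sc.
Let I := norm_inf k Sc.
Let D := norm_delta k Sc.

Notation E2 := (E2 k p).
Notation Ew := (Ew k p).

Lemma Ew_firstn a A (F : list nat -> R) : Ew (a + A) (fun x => F (firstn a x)) = Ew a F.
Proof.
  rewrite Ew_app. apply Ew_ext. intros x1 Hl _.
  rewrite (Ew_ext k p A _ (fun _ => F x1)).
  - apply Ew_const; auto.
  - intros. rewrite firstn_app, Hl, Nat.sub_diag, firstn_O, app_nil_r, <- Hl, firstn_all. auto.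
Qed.

Lemma Ew_skipn a A (F : list nat -> R) : Ew (a + A) (fun x => F (skipn a x)) = Ew A F.
Proof.
  rewrite Ew_app. rewrite (Ew_ext k p a _ (fun _ => Ew A F)).
  - apply Ew_const; auto.
  - intros x1 Hl _. apply Ew_ext. intros x2 _ _.
    rewrite skipn_app, Hl, Nat.sub_diag, skipn_O, <- Hl, skipn_all. reflexivity.
Qed.

Lemma E2_split a A b B F G :
  E2 (a + A) (b + B) (fun x y => F (firstn a x) (firstn b y) + G (skipn a x) (skipn b y)) = E2 a b F + E2 A B G.
Proof.
  rewrite E2_plus. f_equal.
  - unfold PB.E2. rewrite (Ew_ext k p (a + A) _ (fun x => Ew b (fun y => F (firstn a x) y))).
    + apply (Ew_firstn a A (fun x1 => Ew b (fun y => F x1 y))).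
    + intros x _ _. apply (Ew_firstn b B (fun y => F (firstn a x) y)).
  - unfold PB.E2. rewrite (Ew_ext k p (a + A) _ (fun x => Ew B (fun y => G (skipn a x) y))).
    + apply (Ew_skipn a A (fun x1 => Ew B (fun y => G x1 y))).
    + intros x _ _. apply (Ew_skipn b B (fun y => G (skipn a x) y)).
Qed.

Lemma E2_cutL j : E2 (sfst j) (ssnd j) (cutL Sc j) = sumR (map (fun ab => E2 (fst ab) (snd ab) (Lr Sc)) j).
Proof.
  induction j as [|[a b] j IH].
  - simpl. unfold PB.E2. rewrite !Ew_O. reflexivity.
  - simpl sfst; simpl ssnd. simpl cutL. rewrite E2_split, IH. reflexivity.
Qed.

Definition f a b := E2 a b (Lr Sc).

Lemma f_sym a b : f a b = f b a.
Proof.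
  unfold f. rewrite E2_swap. apply E2_ext. intros. apply (Lr_sym k Sc Hsym); auto.
Qed.

Lemma f_super a1 a2 b1 b2 : f a1 b1 + f a2 b2 <= f (a1 + a2) (b1 + b2).
Proof.
  unfold f. rewrite <- E2_split. apply (E2_le k p Hp). intros x y _ _ _ _.
  rewrite <- (firstn_skipn a1 x) at 3. rewrite <- (firstn_skipn b1 y) at 3.
  apply Lr_superadd.
Qed.

Lemma E2_drop1 a b (c : R) F : E2 (1 + a) (1 + b) (fun x y => c + F (skipn 1 x) (skipn 1 y)) = c + E2 a b F.
Proof.
  pose proof (E2_split 1 a 1 b (fun _ _ => c) F) as H. cbv beta in H. rewrite H.
  rewrite E2_const; auto.
Qed.

Lemma f_S_lower a b : f a b - I <= f (S a) (S b).
Proof.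
  unfold f. change (S a) with (1 + a)%nat. change (S b) with (1 + b)%nat.
  apply Rle_trans with (E2 (1 + a) (1 + b) (fun x y => - I + Lr Sc (skipn 1 x) (skipn 1 y))).
  - rewrite E2_drop1. lra.
  - apply (E2_le k p Hp). intros x y Hx Hy Ox Oy.
    destruct x as [|c x]; [discriminate|]. destruct y as [|d y]; [discriminate|].
    inversion Ox; inversion Oy; subst. simpl skipn.
    pose proof (Lr_m Sc c d x y) as HL. pose proof (Sb k Sc (Some c) (Some d) ltac:(simpl; auto) ltac:(simpl; auto)) as HS. fold I in HS. lra.
Qed.

Lemma f_S_upper a b : f (S a) (S b) <= f a b + 3 * I.
Proof.
  unfold f. change (S a) with (1 + a)%nat. change (S b) with (1 + b)%nat.
  apply Rle_trans with (E2 (1 + a) (1 + b) (fun x y => 3 * I + Lr Sc (skipn 1 x) (skipn 1 y))).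
  - apply (E2_le k p Hp). intros x y Hx Hy Ox Oy.
    destruct x as [|c x]; [discriminate|]. destruct y as [|d y]; [discriminate|].
    inversion Ox; inversion Oy; subst. simpl skipn.
    pose proof (C3 k Sc c x d y ltac:(auto) ltac:(auto) ltac:(auto) ltac:(auto)) as HC. fold I in HC. lra.
  - rewrite E2_drop1. lra.
Qed.

Lemma E2_drop1y a b (c : R) F : E2 a (1 + b) (fun x y => c + F x (skipn 1 y)) = c + E2 a b F.
Proof.
  pose proof (E2_split 0 a 1 b (fun _ _ => c) F) as H. cbv beta in H. simpl plus in H. rewrite E2_const in H by auto. rewrite <- H.
  apply E2_ext. intros. reflexivity.
Qed.

Lemma f_0S b : f 0 (S b) <= f 0 b + I.
Proof.
  unfold f. change (S b) with (1 + b)%nat.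
  apply Rle_trans with (E2 0 (1 + b) (fun x y => I + Lr Sc x (skipn 1 y))).
  - apply (E2_le k p Hp). intros x y Hx Hy Ox Oy.
    destruct x as [|c x]; [|discriminate]. destruct y as [|d y]; [discriminate|].
    inversion Oy; subst. simpl skipn. rewrite Lr_nc.
    pose proof (Sb k Sc None (Some d) ltac:(simpl; auto) ltac:(simpl; auto)) as HS. fold I in HS. lra.
  - rewrite E2_drop1y. lra.
Qed.

Lemma piece_n a b n : (a + b = n)%nat -> f a b <= f n n / 2.
Proof.
  intros E. pose proof (f_super a b b a). rewrite (f_sym b a) in H.
  replace (a + b)%nat with n in H by lia. replace (b + a)%nat with n in H by lia. lra.
Qed.

Lemma piece_nm1 a b n : (a + b + 1 = n)%nat -> f a b <= f n n / 2 + I / 2.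
Proof.
  intros E. pose proof (f_super a (S b) b (S a)). rewrite (f_sym (S b) (S a)) in H.
  replace (a + S b)%nat with n in H by lia. replace (b + S a)%nat with n in H by lia.
  pose proof (f_S_lower a b). lra.
Qed.

Lemma piece_np1 a b n : (a + b = n + 1)%nat -> f a b <= f n n / 2 + 3 * I / 2.
Proof.
  intros E. pose proof (maxl_nonneg (flat_map (fun c => map (fun d => Rabs (Sc c d)) (Astar k)) (Astar k))) as HI.
  change (0 <= I) in HI.
  destruct a as [|a].
  - simpl in E. subst b. rewrite Nat.add_1_r. pose proof (f_0S n). pose proof (piece_n 0 n n ltac:(lia)). lra.
  - destruct b as [|b].
    + rewrite f_sym. replace (S a) with (S n) by lia. pose proof (f_0S n).
      pose proof (piece_n 0 n n ltac:(lia)). lra.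
    + pose proof (f_super (S a) b (S b) a). rewrite (f_sym b a) in H.
      replace (S a + b)%nat with n in H by lia. replace (S b + a)%nat with n in H by lia.
      pose proof (f_S_upper a b). lra.
Qed.

Lemma piece_gen a b n : (n <= a + b + 1)%nat -> (a + b <= n + 1)%nat ->
  f a b <= f n n / 2 + (I + I / 2 * (INR (a + b) - INR n)).
Proof.
  intros H1 H2. pose proof (maxl_nonneg (flat_map (fun c => map (fun d => Rabs (Sc c d)) (Astar k)) (Astar k))) as HI.
  change (0 <= I) in HI.
  destruct (Nat.eq_dec (a + b) n) as [E|E].
  - rewrite E. pose proof (piece_n a b n E). nra.
  - destruct (Nat.eq_dec (a + b + 1) n) as [E'|E'].
    + pose proof (piece_nm1 a b n E'). assert (INR n = INR (a + b) + 1) by (rewrite <- E', plus_INR; simpl; ring). rewrite H0. nra.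
    + assert (E3 : (a + b = n + 1)%nat) by lia. pose proof (piece_np1 a b n E3).
      rewrite E3, plus_INR. simpl INR. nra.
Qed.

Lemma sum_lin (al be : R) j : sumR (map (fun ab => al + be * INR (fst ab + snd ab)) j) =
  INR (length j) * al + be * INR (sfst j + ssnd j).
Proof.
  induction j as [|[a b] j IH]; simpl sfst; simpl ssnd.
  - simpl. ring.
  - rewrite map_cons, sumR_cons, IH. simpl length. rewrite S_INR.
    replace (a + sfst j + (b + ssnd j))%nat with ((a + b) + (sfst j + ssnd j))%nat by lia.
    rewrite (plus_INR (a+b)). simpl fst; simpl snd. ring.
Qed.

Lemma EZ_bound m n j : length j = (2 * m)%nat ->
  Forall (fun ab => n <= fst ab + snd ab + 1 /\ fst ab + snd ab <= n + 1)%nat j ->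
  (sfst j + ssnd j = 2 * (m * n))%nat ->
  sumR (map (fun ab => f (fst ab) (snd ab)) j) <= INR m * f n n + 2 * INR m * I.
Proof.
  intros Hl HF Hs.
  apply Rle_trans with (sumR (map (fun ab => (f n n / 2 + I - I / 2 * INR n) + I / 2 * INR (fst ab + snd ab)) j)).
  - apply sumR_le. intros [a b] Hin. rewrite Forall_forall in HF. specialize (HF _ Hin). simpl in *.
    pose proof (piece_gen a b n ltac:(lia) ltac:(lia)). lra.
  - rewrite sum_lin, Hl, Hs. rewrite !mult_INR. simpl INR. right. field.
Qed.

Lemma cutL_change_x j : forall u c d v y, okw k u -> okw k v -> okw k y -> (c < k)%nat -> (d < k)%nat ->
  Rabs (cutL Sc j (u ++ c :: v) y - cutL Sc j (u ++ d :: v) y) <= D.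
Proof.
  pose proof (maxl_nonneg (flat_map (fun c => flat_map (fun d => map (fun e => Rabs (Sc c d - Sc c e))
          (Astar k)) (Astar k)) (Astar k))) as HD. change (0 <= D) in HD.
  induction j as [|[a b] j IH]; intros u c d v y Hu Hv Hy Hc Hd.
  - simpl. rewrite Rminus_0_r, Rabs_R0. auto.
  - simpl cutL. destruct (Nat.lt_ge_cases (length u) a) as [Hlt|Hge].
    + rewrite !firstn_app, !skipn_app.
      replace (a - length u)%nat with (S (a - length u - 1)) by lia. simpl firstn. simpl skipn.
      rewrite (firstn_all2 u), (skipn_all2 u) by lia. simpl app.
      replace (Lr Sc (u ++ c :: firstn (a - length u - 1) v) (firstn b y) +
         cutL Sc j (skipn (a - length u - 1) v) (skipn b y) -
         (Lr Sc (u ++ d :: firstn (a - length u - 1) v) (firstn b y) +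
          cutL Sc j (skipn (a - length u - 1) v) (skipn b y)))
        with (Lr Sc (u ++ c :: firstn (a - length u - 1) v) (firstn b y) - Lr Sc (u ++ d :: firstn (a - length u - 1) v) (firstn b y)) by ring.
      apply (Lr_change_x k Sc Hsym); auto; apply okw_firstn; auto.
    + rewrite !firstn_app, !skipn_app.
      replace (a - length u)%nat with 0%nat by lia. simpl firstn. simpl skipn. rewrite !app_nil_r.
      replace (Lr Sc (firstn a u) (firstn b y) + cutL Sc j (skipn a u ++ c :: v) (skipn b y) -
          (Lr Sc (firstn a u) (firstn b y) + cutL Sc j (skipn a u ++ d :: v) (skipn b y)))
        with (cutL Sc j (skipn a u ++ c :: v) (skipn b y) - cutL Sc j (skipn a u ++ d :: v) (skipn b y)) by ring.
      apply IH; auto; apply okw_skipn; auto.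
Qed.

Lemma cutL_change_y j : forall u c d v x, okw k u -> okw k v -> okw k x -> (c < k)%nat -> (d < k)%nat ->
  Rabs (cutL Sc j x (u ++ c :: v) - cutL Sc j x (u ++ d :: v)) <= D.
Proof.
  pose proof (maxl_nonneg (flat_map (fun c => flat_map (fun d => map (fun e => Rabs (Sc c d - Sc c e))
          (Astar k)) (Astar k)) (Astar k))) as HD. change (0 <= D) in HD.
  induction j as [|[a b] j IH]; intros u c d v x Hu Hv Hx Hc Hd.
  - simpl. rewrite Rminus_0_r, Rabs_R0. auto.
  - simpl cutL. destruct (Nat.lt_ge_cases (length u) b) as [Hlt|Hge].
    + rewrite !firstn_app, !skipn_app.
      replace (b - length u)%nat with (S (b - length u - 1)) by lia. simpl firstn. simpl skipn.
      rewrite (firstn_all2 u), (skipn_all2 u) by lia. simpl app.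
      replace (Lr Sc (firstn a x) (u ++ c :: firstn (b - length u - 1) v) +
         cutL Sc j (skipn a x) (skipn (b - length u - 1) v) -
         (Lr Sc (firstn a x) (u ++ d :: firstn (b - length u - 1) v) +
          cutL Sc j (skipn a x) (skipn (b - length u - 1) v)))
        with (Lr Sc (firstn a x) (u ++ c :: firstn (b - length u - 1) v) - Lr Sc (firstn a x) (u ++ d :: firstn (b - length u - 1) v)) by ring.
      apply (Lr_change_y k Sc Hsym); auto; apply okw_firstn; auto.
    + rewrite !firstn_app, !skipn_app.
      replace (b - length u)%nat with 0%nat by lia. simpl firstn. simpl skipn. rewrite !app_nil_r.
      replace (Lr Sc (firstn a x) (firstn b u) + cutL Sc j (skipn a x) (skipn b u ++ c :: v) -
          (Lr Sc (firstn a x) (firstn b u) + cutL Sc j (skipn a x) (skipn b u ++ d :: v)))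
        with (cutL Sc j (skipn a x) (skipn b u ++ c :: v) - cutL Sc j (skipn a x) (skipn b u ++ d :: v)) by ring.
      apply IH; auto; apply okw_skipn; auto.
Qed.

Lemma BD_cutL j N : BD k D (N + N) (fun z => cutL Sc j (firstn N z) (skipn N z)).
Proof.
  intros u v c d Hu Hv Hc Hd Hl. cbv beta.
  destruct (Nat.lt_ge_cases (length u) N) as [Hlt|Hge].
  - rewrite !firstn_app, !skipn_app.
    replace (N - length u)%nat with (S (N - length u - 1)) by lia. simpl firstn. simpl skipn.
    rewrite (firstn_all2 u), (skipn_all2 u) by lia. simpl app.
    apply cutL_change_x; auto; try apply okw_firstn; try apply okw_skipn; auto.
  - rewrite !firstn_app, !skipn_app.
    replace (N - length u)%nat with 0%nat by lia. simpl firstn. simpl skipn. rewrite !app_nil_r.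
    apply cutL_change_y; auto; try apply okw_firstn; try apply okw_skipn; auto.
Qed.

End Main.

End PF.
Import PF.

Module PG.

Definition types (n : nat) : list (nat * nat) :=
  flat_map (fun s => map (fun a => (a, s - a)%nat) (seq 0 (S s))) [(n-1)%nat; n; (n+1)%nat].

Fixpoint tuples {T} (l : list T) (r : nat) : list (list T) :=
  match r with
  | O => [[]]
  | S r => flat_map (fun t => map (cons t) (tuples l r)) l
  end.

Lemma length_flat_map_const {A B} (f : A -> list B) l c : (forall x, In x l -> length (f x) = c) ->
  length (flat_map f l) = (length l * c)%nat.
Proof. induction l; simpl; intros H; auto. rewrite length_app, H, IHl; auto. Qed.

Lemma tuples_len {T} (l : list T) r : length (tuples l r) = (length l ^ r)%nat.
Proof.
  induction r; simpl; auto. rewrite (length_flat_map_const _ _ (length l ^ r)).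
  - lia.
  - intros. rewrite length_map; auto.
Qed.

Lemma tuples_in {T} (l : list T) j : Forall (fun t => In t l) j -> In j (tuples l (length j)).
Proof.
  induction j as [|t j IH]; simpl; intros H; auto. inversion H; subst.
  apply in_flat_map. exists t. split; auto. apply in_map. auto.
Qed.

Lemma tuples_spec {T} (l : list T) r j : In j (tuples l r) -> length j = r /\ Forall (fun t => In t l) j.
Proof.
  revert j; induction r; simpl; intros j H.
  - destruct H as [<-|[]]. auto.
  - apply in_flat_map in H. destruct H as [t [Ht H]]. apply in_map_iff in H. destruct H as [j' [<- Hj']].
    destruct (IHr _ Hj'). split; simpl; auto.
Qed.

Lemma types_len n : (1 <= n)%nat -> length (types n) = (3 * n + 3)%nat.
Proof.
  intros Hn. unfold types. cbn [flat_map]. rewrite !length_app, !length_map, !length_seq. simpl length. lia.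
Qed.

Lemma types_in n a b : (n <= a + b + 1)%nat -> (a + b <= n + 1)%nat -> In (a, b) (types n).
Proof.
  intros H1 H2. unfold types. apply in_flat_map. exists (a + b)%nat. split.
  - simpl. lia.
  - apply in_map_iff. exists a. split; [f_equal; lia|]. apply in_seq. lia.
Qed.

Lemma types_spec n a b : (1 <= n)%nat -> In (a, b) (types n) -> (n <= a + b + 1)%nat /\ (a + b <= n + 1)%nat.
Proof.
  intros Hn H. unfold types in H. apply in_flat_map in H. destruct H as [s [Hs H]].
  apply in_map_iff in H. destruct H as [a' [E Ha]]. injection E; intros; subst. apply in_seq in Ha.
  simpl in Hs. lia.
Qed.

Definition Jset n m := filter (fun j => andb (Nat.eqb (sfst j) (m * n)) (Nat.eqb (ssnd j) (m * n))) (tuples (types n) (2 * m)).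

Lemma Jset_spec n m j : (1 <= n)%nat -> In j (Jset n m) -> length j = (2 * m)%nat /\
  Forall (fun ab => n <= fst ab + snd ab + 1 /\ fst ab + snd ab <= n + 1)%nat j /\
  sfst j = (m * n)%nat /\ ssnd j = (m * n)%nat.
Proof.
  intros Hn H. unfold Jset in H. apply filter_In in H. destruct H as [H1 H2].
  apply andb_prop in H2. destruct H2 as [H2 H3]. apply Nat.eqb_eq in H2, H3.
  destruct (tuples_spec _ _ _ H1) as [L F]. repeat split; auto.
  rewrite Forall_forall in *. intros [a b] Hin. apply types_spec; auto.
Qed.

Lemma Jset_len n m : (1 <= n)%nat -> (length (Jset n m) <= (3 * n + 3) ^ (2 * m))%nat.
Proof.
  intros Hn. unfold Jset. eapply Nat.le_trans; [apply filter_length_le|].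
  rewrite tuples_len, types_len; auto.
Qed.

Lemma Jset_cover Sc n m x y : (1 <= n)%nat -> (1 <= m)%nat -> length x = (m * n)%nat -> length y = (m * n)%nat ->
  exists j, In j (Jset n m) /\ Lr Sc x y <= cutL Sc j x y.
Proof.
  intros Hn Hm Hx Hy.
  destruct (Lr_multicut Sc n Hn (2 * m) ltac:(lia) 0 x y ltac:(lia) ltac:(lia)) as [j [J1 [J2 [J3 [J4 J5]]]]].
  exists j. split; auto. unfold Jset. apply filter_In. split.
  - rewrite <- J1. apply tuples_in. rewrite Forall_forall in *. intros [a b] Hin.
    specialize (J2 _ Hin). simpl in J2. apply types_in; lia.
  - rewrite J3, J4, Hx, Hy, Nat.eqb_refl. reflexivity.
Qed.

Lemma sumR_ge_term {A} (F : A -> R) l a : (forall x, In x l -> 0 <= F x) -> In a l -> F a <= sumR (map F l).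
Proof.
  induction l; simpl; intros H Ha; [destruct Ha|].
  destruct Ha as [<-|Ha].
  - pose proof (sumR_nonneg F l (fun x Hx => H x (or_intror Hx))). lra.
  - pose proof (H a0 (or_introl eq_refl)). pose proof (IHl (fun x Hx => H x (or_intror Hx)) Ha). lra.
Qed.

Lemma sumR_le_len {A} (F : A -> R) l X : (forall x, In x l -> F x <= X) -> sumR (map F l) <= INR (length l) * X.
Proof.
  induction l; intros H; [simpl; lra|]. simpl length. rewrite S_INR. simpl map. rewrite sumR_cons.
  pose proof (H a (or_introl eq_refl)). pose proof (IHl (fun x Hx => H x (or_intror Hx))). lra.
Qed.

Lemma ln_lin w M : 0 < w -> 0 < M -> ln w <= ln M + w / M - 1.
Proof.
  intros Hw HM. pose proof (exp_ineq1_le (ln (w / M))). rewrite exp_ln in H.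
  2:{ apply Rdiv_lt_0_compat; auto. }
  assert (ln w = ln (w / M) + ln M) by (rewrite <- ln_mult; [f_equal; field; lra | apply Rdiv_lt_0_compat; auto | auto]).
  lra.
Qed.

Lemma opt_bound X C A B : 0 < A -> 0 <= B -> (forall th, 0 < th -> X <= C + A / th + B * th) ->
  X <= C + 2 * sqrt (A * B).
Proof.
  intros HA HB H. destruct (Req_dec B 0) as [E|E].
  - subst B. rewrite Rmult_0_r, sqrt_0. apply Rnot_lt_le. intros Hlt.
    specialize (H (2 * A / (X - C)) ltac:(apply Rdiv_lt_0_compat; lra)).
    replace (A / (2 * A / (X - C))) with ((X - C) / 2) in H by (field; lra). lra.
  - assert (HB' : 0 < B) by lra.
    specialize (H (sqrt (A / B)) ltac:(apply sqrt_lt_R0; apply Rdiv_lt_0_compat; lra)).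
    assert (sqrt (A / B) * sqrt B = sqrt A) by (rewrite <- sqrt_mult; [f_equal; field|left; apply Rdiv_lt_0_compat|]; lra).
    assert (0 < sqrt B) by (apply sqrt_lt_R0; lra). assert (0 < sqrt A) by (apply sqrt_lt_R0; lra).
    assert (HAs : sqrt A * sqrt A = A) by (apply sqrt_sqrt; lra).
    assert (HBs : sqrt B * sqrt B = B) by (apply sqrt_sqrt; lra).
    rewrite sqrt_mult by lra.
    assert (E1 : A / sqrt (A / B) = sqrt A * sqrt B).
    { assert (sqrt (A / B) = sqrt A / sqrt B) by (apply sqrt_div; lra). rewrite H3.
      replace (A / (sqrt A / sqrt B)) with ((sqrt A * sqrt A) / (sqrt A / sqrt B)) by (rewrite HAs; reflexivity).
      field. lra. }
    assert (E2 : B * sqrt (A / B) = sqrt A * sqrt B).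
    { assert (sqrt (A / B) = sqrt A / sqrt B) by (apply sqrt_div; lra). rewrite H3.
      replace (B * (sqrt A / sqrt B)) with ((sqrt B * sqrt B) * (sqrt A / sqrt B)) by (rewrite HBs; reflexivity).
      field. lra. }
    lra.
Qed.

Section Final.
Variable k : nat.
Variable p : nat -> R.
Hypothesis Hp : is_distribution k p.
Variable Sc : scoring.
Hypothesis Hsym : is_scoring k Sc.
Let I := norm_inf k Sc.
Let D := norm_delta k Sc.

Notation E2 := (E2 k p).
Notation Ew := (Ew k p).

Lemma I_nn : 0 <= I.
Proof. apply maxl_nonneg. Qed.
Lemma D_nn : 0 <= D.
Proof. apply maxl_nonneg. Qed.

Lemma E2_scal a b c g : E2 a b (fun x y => c * g x y) = c * E2 a b g.
Proof.
  unfold PB.E2. rewrite <- Ew_scal. apply Ew_ext. intros. apply Ew_scal.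
Qed.

Lemma E2_sum a b {A} (J : list A) (G : A -> list nat -> list nat -> R) :
  E2 a b (fun x y => sumR (map (fun j => G j x y) J)) = sumR (map (fun j => E2 a b (G j)) J).
Proof.
  induction J as [|j J IH].
  - simpl. apply E2_const; auto.
  - simpl map. rewrite sumR_cons. rewrite <- IH. rewrite <- E2_plus. apply E2_ext. intros. reflexivity.
Qed.

Lemma E2_Ew N g : E2 N N g = Ew (N + N) (fun z => g (firstn N z) (skipn N z)).
Proof.
  rewrite Ew_app. unfold PB.E2. apply Ew_ext. intros x1 Hl _. apply Ew_ext. intros x2 _ _.
  rewrite firstn_app, skipn_app, Hl, Nat.sub_diag, firstn_O, skipn_O, app_nil_r.
  rewrite <- Hl, firstn_all, skipn_all. reflexivity.
Qed.

Lemma term_bound n m j th : (1 <= n)%nat -> In j (Jset n m) -> 0 < th ->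
  E2 (m * n) (m * n) (fun x y => exp (th * cutL Sc j x y)) <=
  exp (th ^ 2 * INR (m * n + m * n) * D ^ 2 / 8) * exp (th * (INR m * PF.f k p Sc n n + 2 * INR m * I)).
Proof.
  intros Hn HJ Hth. destruct (Jset_spec n m j Hn HJ) as [J1 [J2 [J3 J4]]].
  set (N := (m * n)%nat) in *.
  set (mu := E2 N N (cutL Sc j)).
  assert (Hmu : mu <= INR m * PF.f k p Sc n n + 2 * INR m * I).
  { unfold mu. rewrite <- J3 at 1. rewrite <- J4. rewrite E2_cutL by auto.
    apply EZ_bound; auto. lia. }
  rewrite (E2_ext k p N N _ (fun x y => exp (th * mu) * exp (th * (cutL Sc j x y - mu)))).
  2:{ intros. rewrite <- exp_plus. f_equal. ring. }
  rewrite E2_scal. rewrite Rmult_comm. apply Rmult_le_compat.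
  - rewrite <- (E2_const k p Hp N N 0). apply (E2_le k p Hp). intros. left; apply exp_pos.
  - left; apply exp_pos.
  - rewrite E2_Ew. unfold mu. rewrite E2_Ew.
    apply (mcd k p Hp D (N + N) (fun z => cutL Sc j (firstn N z) (skipn N z))).
    + apply BD_cutL; auto.
    + lra.
  - apply exp_le. apply Rmult_le_compat_l; lra.
Qed.

Lemma main_bound n m : (1 <= n)%nat -> (1 <= m)%nat ->
  E2 (m * n) (m * n) (Lr Sc) <= (INR m * PF.f k p Sc n n + 2 * INR m * I) +
     2 * sqrt ((INR (2 * m) * ln (INR (3 * n + 3))) * (INR (m * n + m * n) * D ^ 2 / 8)).
Proof.
  intros Hn Hm. set (N := (m * n)%nat). set (J := Jset n m).
  set (C := INR m * PF.f k p Sc n n + 2 * INR m * I).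
  set (A := INR (2 * m) * ln (INR (3 * n + 3))).
  set (B := INR (N + N) * D ^ 2 / 8).
  assert (HA : 0 < A).
  { unfold A. apply Rmult_lt_0_compat.
    - apply lt_0_INR. lia.
    - rewrite <- ln_1. apply ln_increasing; [lra|]. apply lt_1_INR. lia. }
  assert (HB : 0 <= B).
  { unfold B. pose proof (pos_INR (N + N)). pose proof (pow2_ge_0 D). unfold Rdiv.
    apply Rmult_le_pos; [apply Rmult_le_pos; auto|lra]. }
  apply opt_bound; auto. intros th Hth.
  set (W := fun x y => sumR (map (fun j => exp (th * cutL Sc j x y)) J)).
  pose proof I_nn as HI.
  set (w0 := exp (th * (- INR (N + N) * I))).
  assert (HW : forall x y, length x = N -> length y = N -> okw k x -> okw k y ->
            w0 <= W x y /\ Lr Sc x y <= ln (W x y) / th).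
  { intros x y Hx Hy Ox Oy.
    destruct (Jset_cover Sc n m x y Hn Hm Hx Hy) as [j [Hj Hc]].
    assert (H1 : exp (th * Lr Sc x y) <= W x y).
    { apply Rle_trans with (exp (th * cutL Sc j x y)).
      - apply exp_le. apply Rmult_le_compat_l; lra.
      - unfold W. apply (sumR_ge_term (fun j => exp (th * cutL Sc j x y))); auto.
        intros; left; apply exp_pos. }
    pose proof (Lr_lower k Sc x y Ox Oy). rewrite Hx, Hy in H. fold I in H.
    split.
    - eapply Rle_trans; [|exact H1]. unfold w0. apply exp_le. apply Rmult_le_compat_l; lra.
    - assert (th * Lr Sc x y <= ln (W x y)).
      { rewrite <- (ln_exp (th * Lr Sc x y)). apply ln_le; auto. apply exp_pos. }
      apply Rmult_le_reg_l with th; auto. unfold Rdiv. rewrite <- Rmult_assoc, (Rmult_comm th (ln _)).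
      rewrite Rmult_assoc, Rinv_r by lra. lra. }
  set (M := E2 N N W).
  assert (HM : w0 <= M).
  { unfold M. rewrite <- (E2_const k p Hp N N w0). apply (E2_le k p Hp). intros. apply HW; auto. }
  assert (Hw0 : 0 < w0) by apply exp_pos.
  (* Jensen *)
  assert (HJ1 : E2 N N (Lr Sc) <= ln M / th).
  { apply Rle_trans with (E2 N N (fun x y => / th * ln (W x y))).
    - apply (E2_le k p Hp). intros. rewrite Rmult_comm. apply HW; auto.
    - rewrite E2_scal. unfold Rdiv. rewrite (Rmult_comm (ln M)). apply Rmult_le_compat_l.
      + left; apply Rinv_0_lt_compat; auto.
      + apply Rle_trans with (E2 N N (fun x y => (ln M - 1) + / M * W x y)).
        * apply (E2_le k p Hp). intros x y Hx Hy Ox Oy. destruct (HW x y Hx Hy Ox Oy) as [H1 _].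
          pose proof (ln_lin (W x y) M ltac:(lra) ltac:(lra)). unfold Rdiv in H. lra.
        * rewrite E2_plus, E2_const, E2_scal by auto. fold M. rewrite Rinv_l by lra. lra. }
  set (T := exp (th ^ 2 * INR (N + N) * D ^ 2 / 8) * exp (th * C)).
  assert (HT : 0 < T) by (unfold T; apply Rmult_lt_0_compat; apply exp_pos).
  assert (HMT : M <= INR ((3 * n + 3) ^ (2 * m)) * T).
  { unfold M, W. rewrite E2_sum. eapply Rle_trans.
    - apply sumR_le_len. intros j Hj. apply term_bound; auto.
    - fold C. fold T. apply Rmult_le_compat_r; [lra|]. apply le_INR. apply Jset_len; auto. }
  assert (HlnM : ln M <= A + th ^ 2 * B * 1 + th * C).
  { eapply Rle_trans. { apply ln_le; [lra|exact HMT]. }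
    rewrite ln_mult.
    - unfold T. rewrite ln_mult by apply exp_pos. rewrite !ln_exp.
      rewrite pow_INR, ln_pow. 2:{ apply lt_0_INR; lia. }
      unfold A, B. right. unfold Rdiv. ring.
    - apply lt_0_INR. apply Nat.neq_0_lt_0. apply Nat.pow_nonzero. lia.
    - auto. }
  apply Rle_trans with (ln M / th); auto.
  apply Rmult_le_reg_l with th; auto. unfold Rdiv.
  replace (th * (ln M * / th)) with (ln M) by (field; lra).
  replace (th * (C + A * / th + B * th)) with (A + th ^ 2 * B * 1 + th * C) by (field; lra). auto.
Qed.

End Final.

End PG.
Import PG.

Module PZ.

Lemma ln_le_2sqrt y : 0 < y -> ln y <= 2 * sqrt y.
Proof.
  intros Hy. assert (Hs : 0 < sqrt y) by (apply sqrt_lt_R0; auto).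
  assert (ln y = 2 * ln (sqrt y)).
  { rewrite <- (sqrt_sqrt y) at 1 by lra. rewrite ln_mult by auto. ring. }
  pose proof (exp_ineq1_le (ln (sqrt y))). rewrite exp_ln in H0 by auto. lra.
Qed.

Lemma sq_le x y : 0 <= x -> 0 <= y -> x * x <= y * y -> x <= y.
Proof. intros. nra. Qed.

Section Z.
Variable k : nat.
Variable p : nat -> R.
Hypothesis Hp : is_distribution k p.
Variable Sc : scoring.
Hypothesis Hsym : is_scoring k Sc.
Let I := norm_inf k Sc.
Let D := norm_delta k Sc.
Let a n := PF.f k p Sc n n.

Lemma a_eq n : ELn k p Sc n = a n.
Proof. unfold a, PF.f. apply ELn_E2. Qed.

Lemma a_0 : a 0 = 0.
Proof. unfold a, PF.f, PB.E2. rewrite !Ew_O. reflexivity. Qed.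

Lemma a_mult m n : INR m * a n <= a (m * n).
Proof.
  induction m as [|m IH].
  - simpl. rewrite a_0. lra.
  - rewrite S_INR. replace (S m * n)%nat with (n + m * n)%nat by lia.
    pose proof (f_super k p Hp Sc n (m * n) n (m * n)). unfold a in *. lra.
Qed.

Lemma a_upper n : a n <= INR (n + n) * I.
Proof.
  unfold a, PF.f. rewrite <- (E2_const k p Hp n n (INR (n + n) * I)).
  apply (E2_le k p Hp). intros x y Hx Hy Ox Oy. pose proof (Lr_upper k Sc x y Ox Oy).
  rewrite Hx, Hy in H. auto.
Qed.

Definition eps n := c_n n * D * sqrt (ln (INR n)) / sqrt (INR n) + 2 * I / INR n.

Lemma cn_id n : (2 <= n)%nat -> c_n n * sqrt (ln (INR n)) = sqrt (2 * ln 3 + 2 * ln (INR n + 2)).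
Proof.
  intros Hn. unfold c_n.
  assert (Hl : 0 < ln (INR n)) by (rewrite <- ln_1; apply ln_increasing; [lra|]; apply lt_1_INR; lia).
  assert (H3 : 0 <= 2 * ln 3 + 2 * ln (INR n + 2)).
  { assert (0 <= ln 3) by (rewrite <- ln_1; apply ln_le; lra).
    assert (0 <= ln (INR n + 2)) by (rewrite <- ln_1; apply ln_le; [lra|]; pose proof (pos_INR n); lra). lra. }
  rewrite <- sqrt_mult.
  - f_equal. field. lra.
  - unfold Rdiv. apply Rmult_le_pos; auto. left; apply Rinv_0_lt_compat; auto.
  - lra.
Qed.

Lemma key n m : (2 <= n)%nat -> (1 <= m)%nat -> a (m * n) / INR (m * n) <= a n / INR n + eps n.
Proof.
  intros Hn Hm.
  pose proof (main_bound k p Hp Sc Hsym n m ltac:(lia) Hm) as HB.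
  change (PB.E2 k p (m * n) (m * n) (Lr Sc)) with (a (m * n)) in HB. fold (a n) in HB. fold I D in HB.
  set (L := ln (INR (3 * n + 3))) in HB.
  set (Q := sqrt (INR (2 * m) * L * (INR (m * n + m * n) * D ^ 2 / 8))) in HB.
  assert (Hnr : 2 <= INR n) by (apply (le_INR 2); lia).
  assert (Hmr : 1 <= INR m) by (apply (le_INR 1); lia).
  assert (HI : 0 <= I) by apply (I_nn k Sc). assert (HD : 0 <= D) by apply (D_nn k Sc).
  assert (Hsn : 0 < sqrt (INR n)) by (apply sqrt_lt_R0; lra).
  set (R := sqrt (2 * ln 3 + 2 * ln (INR n + 2))).
  assert (HR : c_n n * D * sqrt (ln (INR n)) = D * R).
  { unfold R. rewrite <- cn_id by auto. ring. }
  assert (HL0 : 0 <= L) by (unfold L; rewrite <- ln_1; apply ln_le; [lra|]; apply (le_INR 1); lia).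
  assert (HLR : 2 * L <= R * R).
  { unfold R. rewrite sqrt_sqrt.
    - assert (L <= ln 3 + ln (INR n + 2)).
      { rewrite <- ln_mult by lra. unfold L. apply ln_le.
        - apply lt_0_INR; lia.
        - rewrite plus_INR, mult_INR. simpl INR. lra. }
      lra.
    - assert (0 <= ln 3) by (rewrite <- ln_1; apply ln_le; lra).
      assert (0 <= ln (INR n + 2)) by (rewrite <- ln_1; apply ln_le; lra). lra. }
  assert (HR0 : 0 <= R) by apply sqrt_pos.
  assert (HQ : 2 * Q <= INR m * D * R * sqrt (INR n)).
  { apply sq_le.
    - pose proof (sqrt_pos (INR (2 * m) * L * (INR (m * n + m * n) * D ^ 2 / 8))). fold Q in H. lra.
    - apply Rmult_le_pos; [|lra]. apply Rmult_le_pos; [|lra]. apply Rmult_le_pos; lra.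
    - unfold Q. replace (2 * sqrt (INR (2 * m) * L * (INR (m * n + m * n) * D ^ 2 / 8)) *
                (2 * sqrt (INR (2 * m) * L * (INR (m * n + m * n) * D ^ 2 / 8))))
        with (4 * (sqrt (INR (2 * m) * L * (INR (m * n + m * n) * D ^ 2 / 8)) * sqrt (INR (2 * m) * L * (INR (m * n + m * n) * D ^ 2 / 8)))) by ring.
      rewrite sqrt_sqrt.
      2:{ rewrite plus_INR, !mult_INR. simpl INR. apply Rmult_le_pos; [apply Rmult_le_pos; lra|].
          unfold Rdiv. apply Rmult_le_pos; [apply Rmult_le_pos; [nra|nra]|lra]. }
      replace (INR m * D * R * sqrt (INR n) * (INR m * D * R * sqrt (INR n)))
        with (INR m * INR m * D * D * (R * R) * (sqrt (INR n) * sqrt (INR n))) by ring.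
      rewrite sqrt_sqrt by lra. rewrite plus_INR, !mult_INR. simpl INR.
      assert (0 <= INR m * INR m * D * D * INR n) by (repeat apply Rmult_le_pos; lra).
      nra. }
  unfold eps. rewrite HR.
  assert (Hmn : 0 < INR (m * n)) by (rewrite mult_INR; nra).
  apply Rmult_le_reg_l with (INR (m * n)); auto.
  replace (INR (m * n) * (a (m * n) / INR (m * n))) with (a (m * n)) by (field; lra).
  rewrite mult_INR. rewrite mult_INR in Hmn.
  replace (INR m * INR n * (a n / INR n + (D * R / sqrt (INR n) + 2 * I / INR n)))
    with (INR m * a n + 2 * INR m * I + INR m * D * R * (INR n / sqrt (INR n))) by (field; lra).
  replace (INR n / sqrt (INR n)) with (sqrt (INR n)).
  2:{ rewrite <- (sqrt_sqrt (INR n)) at 2 by lra. field. lra. }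
  lra.
Qed.

End Z.

Lemma eps_small k Sc n eps0 : (2 <= n)%nat -> 0 < eps0 ->
  INR n > 2 + 4 * norm_inf k Sc / eps0 + (48 * (norm_delta k Sc)^2 / eps0^2)^2 ->
  eps k Sc n < eps0.
Proof.
  intros Hn He HN. set (I := norm_inf k Sc) in *. set (D := norm_delta k Sc) in *.
  assert (HI : 0 <= I) by apply (I_nn k Sc). assert (HD : 0 <= D) by apply (D_nn k Sc).
  assert (Hnr : 2 <= INR n) by (apply (le_INR 2); lia).
  assert (Hsn : 0 < sqrt (INR n)) by (apply sqrt_lt_R0; lra).
  unfold eps. fold I D.
  set (R := sqrt (2 * ln 3 + 2 * ln (INR n + 2))).
  assert (HR : c_n n * D * sqrt (ln (INR n)) = D * R).
  { unfold R. rewrite <- cn_id by auto. ring. }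
  rewrite HR.
  assert (HRR : R * R <= 12 * sqrt (INR n)).
  { unfold R. assert (0 <= ln 3) by (rewrite <- ln_1; apply ln_le; lra).
    assert (0 <= ln (INR n + 2)) by (rewrite <- ln_1; apply ln_le; lra).
    rewrite sqrt_sqrt by lra.
    replace (2 * ln 3 + 2 * ln (INR n + 2)) with (2 * ln (3 * (INR n + 2))) by (rewrite ln_mult by lra; ring).
    pose proof (ln_le_2sqrt (3 * (INR n + 2)) ltac:(lra)).
    assert (sqrt (3 * (INR n + 2)) <= sqrt (9 * INR n)) by (apply sqrt_le_1_alt; lra).
    rewrite (sqrt_mult 9 (INR n)) in H2 by lra. replace (sqrt 9) with 3 in H2.
    2:{ replace 9 with (3 * 3) by ring. rewrite sqrt_square; lra. }
    lra. }
  assert (Hs2 : 48 * D ^ 2 / eps0 ^ 2 <= sqrt (INR n)).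
  { assert (0 <= 48 * D ^ 2 / eps0 ^ 2).
    { unfold Rdiv. apply Rmult_le_pos; [nra|]. left; apply Rinv_0_lt_compat; nra. }
    rewrite <- (sqrt_pow2 (48 * D ^ 2 / eps0 ^ 2)) by auto. apply sqrt_le_1_alt.
    assert (0 <= 4 * I / eps0) by (unfold Rdiv; apply Rmult_le_pos; [lra|left; apply Rinv_0_lt_compat; lra]).
    lra. }
  assert (H1 : D * R / sqrt (INR n) <= eps0 / 2).
  { apply sq_le.
    - unfold Rdiv. apply Rmult_le_pos; [apply Rmult_le_pos; [lra|apply sqrt_pos]|left; apply Rinv_0_lt_compat; lra].
    - lra.
    - replace (D * R / sqrt (INR n) * (D * R / sqrt (INR n))) with (D * D * (R * R) / (sqrt (INR n) * sqrt (INR n))) by (field; lra).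
      rewrite sqrt_sqrt by lra.
      apply Rle_trans with (D * D * (12 * sqrt (INR n)) / INR n).
      { unfold Rdiv. apply Rmult_le_compat_r; [left; apply Rinv_0_lt_compat; lra|]. apply Rmult_le_compat_l; nra. }
      replace (D * D * (12 * sqrt (INR n)) / INR n) with (12 * D ^ 2 / sqrt (INR n)).
      2:{ pose proof (sqrt_sqrt (INR n) ltac:(lra)) as Es. set (s := sqrt (INR n)) in *.
          rewrite <- Es. field. lra. }
      apply Rmult_le_reg_r with (sqrt (INR n)); auto.
      unfold Rdiv. rewrite Rmult_assoc, Rinv_l by lra.
      apply Rle_trans with (eps0 / 2 * (eps0 / 2) * (48 * D ^ 2 / eps0 ^ 2)).
      + right. field. lra.
      + apply Rmult_le_compat_l; [nra|lra]. }
  assert (H2 : 2 * I / INR n < eps0 / 2).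
  { apply Rmult_lt_reg_r with (INR n); [lra|]. unfold Rdiv. rewrite Rmult_assoc, Rinv_l by lra.
    assert (0 <= (48 * D ^ 2 / eps0 ^ 2) ^ 2) by apply pow2_ge_0.
    assert (4 * I / eps0 < INR n) by lra.
    apply Rmult_lt_compat_l with (r := eps0) in H0; auto.
    replace (eps0 * (4 * I / eps0)) with (4 * I) in H0 by (field; lra). lra. }
  lra.
Qed.

Theorem main k p Sc : is_distribution k p -> is_scoring k Sc ->
  exists lam : R,
    Un_cv (lambda_n k p Sc) lam /\
    forall n : nat, (2 <= n)%nat ->
      lambda_n k p Sc n <= lam /\
      lam <= lambda_n k p Sc n
             + c_n n * norm_delta k Sc * sqrt (ln (INR n)) / sqrt (INR n)
             + 2 * norm_inf k Sc / INR n.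
Proof.
  intros Hp Hsym.
  set (E := fun r => exists n', (1 <= n')%nat /\ r = lambda_n k p Sc n').
  assert (HI : 0 <= norm_inf k Sc) by apply (I_nn k Sc).
  assert (Hb : bound E).
  { exists (2 * norm_inf k Sc). intros r [n' [Hn' ->]]. unfold lambda_n. rewrite a_eq.
    pose proof (a_upper k p Hp Sc n'). assert (0 < INR n') by (apply lt_0_INR; lia).
    apply Rmult_le_reg_r with (INR n'); auto. unfold Rdiv. rewrite Rmult_assoc, Rinv_l by lra.
    rewrite plus_INR in H. lra. }
  assert (Hne : exists r, E r) by (exists (lambda_n k p Sc 1); exists 1%nat; split; auto).
  destruct (completeness E Hb Hne) as [lam [Hub Hlub]].
  assert (Hup : forall n, (2 <= n)%nat -> lam <= lambda_n k p Sc n + eps k Sc n).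
  { intros n Hn. apply Hlub. intros r [n' [Hn' ->]].
    unfold lambda_n. rewrite !a_eq.
    pose proof (a_mult k p Hp Sc n n').
    pose proof (key k p Hp Sc Hsym n n' Hn Hn').
    assert (0 < INR n') by (apply lt_0_INR; lia). assert (0 < INR n) by (apply lt_0_INR; lia).
    apply Rle_trans with (PF.f k p Sc (n' * n) (n' * n) / INR (n' * n)); auto.
    rewrite Nat.mul_comm. rewrite mult_INR.
    apply Rmult_le_reg_r with (INR n * INR n'); [nra|].
    replace (PF.f k p Sc n' n' / INR n' * (INR n * INR n')) with (INR n * PF.f k p Sc n' n') by (field; lra).
    replace (PF.f k p Sc (n * n') (n * n') / (INR n * INR n') * (INR n * INR n')) with (PF.f k p Sc (n * n') (n * n')) by (field; lra).
    auto. }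
  assert (Hlow : forall n, (2 <= n)%nat -> lambda_n k p Sc n <= lam).
  { intros n Hn. apply Hub. exists n. split; auto; lia. }
  exists lam. split.
  - intros e He.
    destruct (INR_unbounded (2 + 4 * norm_inf k Sc / e + (48 * (norm_delta k Sc)^2 / e^2)^2)) as [N HN].
    exists (max N 2). intros n Hn. unfold R_dist.
    assert (Hn2 : (2 <= n)%nat) by lia.
    assert (INR N <= INR n) by (apply le_INR; lia).
    pose proof (eps_small k Sc n e Hn2 He ltac:(lra)).
    pose proof (Hup n Hn2). pose proof (Hlow n Hn2).
    rewrite Rabs_minus_sym, Rabs_right by lra. lra.
  - intros n Hn. split; auto. pose proof (Hup n Hn). unfold eps in H. lra.
Qed.

End PZ.
Import PZ.

Theorem mainTheorem9 (k : nat) (p : nat -> R) (S : scoring) :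
  is_distribution k p -> is_scoring k S ->
  exists lam : R,
    Un_cv (lambda_n k p S) lam /\
    forall n : nat, (2 <= n)%nat ->
      lambda_n k p S n <= lam /\
      lam <= lambda_n k p S n
             + c_n n * norm_delta k S * sqrt (ln (INR n)) / sqrt (INR n)
             + 2 * norm_inf k S / INR n.
Proof.
  intros Hp Hs. exact (PZ.main k p S Hp Hs).
Qed.
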